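(* Let $0=x_1<\dots<x_N=1$ be a partition of $I=[0,1]$, let $\{q_n\}$ be a sequence in $(0,1]$ with $\lim q_n=1$, and let $\alpha_i$, $i\in\mathbb{N}_{N-1}$, be bounded functions on $I$ with $\|\alpha_i\|_\infty<1$. Let $\{\lambda_i\}_{i\ge1}$ be a sequence of distinct positive real numbers with $\inf_{i\ge1}\lambda_i>0$ and $\sum_{i=1}^\infty\frac1{\lambda_i}=\infty$. Then the set \[ S=\bigcup_{n=1}^\infty\bigcup_{m=1}^\infty\operatorname{span}\{1,(x^{\lambda_1})^{(q_n,\alpha)}_n,\dots,(x^{\lambda_m})^{(q_n,\alpha)}_n\} \] is dense in $C[0,1]$ with respect to the sup-norm.
   Context: For $q\in(0,1]$: $[k]_q=\frac{1-q^k}{1-q}$ ($q\ne1$), $[k]_1=k$, $q$-factorials, $\binom{n}{k}_q=\frac{[n]_q!}{[k]_q![n-k]_q!}$. On $[0,1]$ the quantum MKZ operator is $M_{n,q}h(x)=\prod_{j=0}^n(1-q^jx)\sum_{k\ge0}\binom{n+k}{k}_q x^k h\!\left(\frac{[k]_q}{[k+n]_q}\right)$ for $0\le x<1$, $M_{n,q}h(1)=h(1)$. Let $u_i(x)=a_ix+b_i$ be the affine maps with $u_i(0)=x_i$, $u_i(1)=x_{i+1}$, $i\in\mathbb{N}_{N-1}$. For $h\in C[0,1]$, $h^{(q,\alpha)}_n$ denotes the unique bounded function $G:[0,1]\to\mathbb{R}$ with $G(u_i(x))=h(u_i(x))+\alpha_i(x)(G(x)-M_{n,q}h(x))$ for all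 $x\in I$, $i\in\mathbb{N}_{N-1}$; $(x^{\lambda})^{(q,\alpha)}_n$ is this function for $h(x)=x^\lambda$. *)

(* Defs.v *)
From Stdlib Require Import Reals Lra.
From Coquelicot Require Import Coquelicot.
Open Scope R_scope.

Definition qint (q : R) (k : nat) : R :=
  if Req_EM_T q 1 then INR k else (1 - q ^ k) / (1 - q).

Fixpoint qfact (q : R) (n : nat) : R :=
  match n with
  | O => 1
  | S m => qfact q m * qint q (S m)
  end.

Definition qbinom (q : R) (n k : nat) : R :=
  qfact q n / (qfact q k * qfact q (n - k)).

Fixpoint qprod (q : R) (n : nat) (x : R) : R :=
  match n with
  | O => 1 - x
  | S m => qprod q m x * (1 - q ^ (S m) * x)
  end.

Definition MKZ (q : R) (n : nat) (h : R -> R) (x : R) : R :=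
  if Rlt_dec x 1 then
    qprod q n x *
      Series (fun k => qbinom q (n + k) k * x ^ k * h (qint q k / qint q (k + n)))
  else h 1.

Definition uaff (xs : nat -> R) (i : nat) (x : R) : R :=
  xs i + (xs (S i) - xs i) * x.

(* G is a (the) bounded function on I = [0,1] satisfying the self-referential
   equation defining h^{(q,alpha)}_n; indices i range over {1,...,N-1}. *)
Definition is_fractal (N : nat) (xs : nat -> R) (alpha : nat -> R -> R)
  (q : R) (n : nat) (h G : R -> R) : Prop :=
  (exists B, forall x, 0 <= x <= 1 -> Rabs (G x) <= B) /\
  (forall (i : nat) (x : R), (1 <= i <= N - 1)%nat -> 0 <= x <= 1 ->
     G (uaff xs i x) = h (uaff xs i x) + alpha i x * (G x - MKZ q n h x)).

Definition xpow (lam : R) (x : R) : R :=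
  if Rle_dec x 0 then 0 else Rpower x lam.

(* Main.v *)
Require Import Defs.
From Stdlib Require Import Reals Lra Lia Arith Classical IndefiniteDescription.
From Coquelicot Require Import Coquelicot.
Open Scope R_scope.


Ltac fixR := match goal with |- @eq _ ?a ?b => change (@eq R a b) end.
Lemma plus_R (a b : R) : plus a b = a + b. Proof. reflexivity. Qed.
Lemma mult_R (a b : R) : mult a b = a * b. Proof. reflexivity. Qed.
Lemma zero_R : (zero : R) = 0. Proof. reflexivity. Qed.

Lemma sumR_mult_l (a : R) (u : nat -> R) n m :
  sum_n_m (fun k => a * u k) n m = a * sum_n_m u n m.
Proof. exact (sum_n_m_mult_l (K:=R_Ring) a u n m). Qed.
Lemma sumR_plus (u v : nat -> R) n m :
  sum_n_m (fun k => u k + v k) n m = sum_n_m u n m + sum_n_m v n m.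
Proof. exact (sum_n_m_plus (G:=R_AbelianMonoid) u v n m). Qed.

Lemma sumR_ext (u v : nat -> R) n m : (forall k, u k = v k) ->
  sum_n_m u n m = sum_n_m v n m.
Proof. intros H; apply sum_n_m_ext; exact H. Qed.
Lemma sumR_ext_loc (u v : nat -> R) n m : (forall k, (n <= k <= m)%nat -> u k = v k) ->
  sum_n_m u n m = sum_n_m v n m.
Proof. intros H; apply sum_n_m_ext_loc; exact H. Qed.

Definition inspan (lam : nat -> R) (g : R -> R) : Prop :=
  exists (m : nat) (c : nat -> R), forall x, 0 <= x <= 1 ->
    g x = c O + sum_n_m (fun j => c j * xpow (lam j) x) 1 m.

Definition incl (lam : nat -> R) (g : R -> R) : Prop :=
  forall eps, 0 < eps -> exists h, inspan lam h /\
    forall x, 0 <= x <= 1 -> Rabs (g x - h x) < eps.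

Lemma sum_trunc (c e : nat -> R) (m M : nat) : (m <= M)%nat ->
  sum_n_m (fun j => (if (j <=? m)%nat then c j else 0) * e j) 1 M =
  sum_n_m (fun j => c j * e j) 1 m.
Proof.
  intros HM.
  destruct m as [|m].
  - rewrite (sum_n_m_zero _ 1 0) by lia.
    destruct M as [|M]. { rewrite sum_n_m_zero by lia. reflexivity. }
    rewrite (sum_n_m_ext_loc _ (fun _ => zero)).
    + apply sum_n_m_const_zero.
    + intros k Hk. destruct k; [lia|]. simpl. change zero with 0. ring.
  - rewrite (sum_n_m_Chasles _ 1 (S m) M) by lia.
    rewrite (sum_n_m_ext_loc _ (fun _ => zero) (S (S m)) M).
    + rewrite sum_n_m_const_zero. rewrite plus_zero_r.
      apply sum_n_m_ext_loc. intros k Hk.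
      replace (k <=? S m)%nat with true; [reflexivity|].
      symmetry; apply Nat.leb_le; lia.
    + intros k Hk. replace (k <=? S m)%nat with false.
      * exact (Rmult_0_l _).
      * symmetry; apply Nat.leb_gt; lia.
Qed.

Lemma inspan_ext lam g g' : inspan lam g -> (forall x, 0 <= x <= 1 -> g' x = g x) ->
  inspan lam g'.
Proof.
  intros [m [c H]] E. exists m, c. intros x Hx. rewrite E by auto. auto.
Qed.

Lemma inspan_plus lam g1 g2 : inspan lam g1 -> inspan lam g2 ->
  inspan lam (fun x => g1 x + g2 x).
Proof.
  intros [m1 [c1 H1]] [m2 [c2 H2]].
  exists (m1 + m2)%nat,
    (fun j => (if (j <=? m1)%nat then c1 j else 0) + (if (j <=? m2)%nat then c2 j else 0)).
  intros x Hx. rewrite H1, H2 by auto.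
  set (e := fun j => xpow (lam j) x).
  set (c1' := fun j => if (j <=? m1)%nat then c1 j else 0).
  set (c2' := fun j => if (j <=? m2)%nat then c2 j else 0).
  assert (E : sum_n_m (fun j => (c1' j + c2' j) * e j) 1 (m1 + m2) =
    plus (sum_n_m (fun j => c1' j * e j) 1 (m1 + m2)) (sum_n_m (fun j => c2' j * e j) 1 (m1 + m2))).
  { rewrite <- sum_n_m_plus. apply sum_n_m_ext. intros j. fixR. unfold plus; simpl. ring. }
  change (c1 0%nat + sum_n_m (fun j => c1 j * e j) 1 m1 + (c2 0%nat + sum_n_m (fun j => c2 j * e j) 1 m2) =
    c1' 0%nat + c2' 0%nat + sum_n_m (fun j => (c1' j + c2' j) * e j) 1 (m1 + m2)).
  rewrite E. unfold c1', c2'. rewrite (sum_trunc c1 e m1 (m1+m2)) by lia. rewrite (sum_trunc c2 e m2 (m1+m2)) by lia. simpl. unfold plus; simpl. ring.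
Qed.

Lemma inspan_scal lam g a : inspan lam g -> inspan lam (fun x => a * g x).
Proof.
  intros [m [c H]]. exists m, (fun j => a * c j).
  intros x Hx. rewrite H by auto.
  assert (E : sum_n_m (fun j => a * c j * xpow (lam j) x) 1 m =
     a * (sum_n_m (fun j => c j * xpow (lam j) x) 1 m)).
  { rewrite <- sumR_mult_l. apply sumR_ext. intros j. ring. }
  rewrite E. ring.
Qed.

Lemma inspan_const lam a : inspan lam (fun _ => a).
Proof.
  exists O, (fun _ => a). intros x Hx. rewrite sum_n_m_zero by lia.
  change zero with 0. ring.
Qed.

Lemma inspan_xpow lam j : (1 <= j)%nat -> inspan lam (xpow (lam j)).
Proof.
  intros Hj. exists j, (fun k => if (k =? j)%nat then 1 else 0).
  intros x Hx. destruct j as [|j]; [lia|].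
  replace (S j =? 0)%nat with false by reflexivity.
  rewrite sum_n_Sm by lia.
  rewrite Nat.eqb_refl.
  rewrite (sum_n_m_ext_loc _ (fun _ => zero) 1 j).
  - rewrite sum_n_m_const_zero. fixR. unfold plus, zero; simpl. ring.
  - intros k Hk. replace (k =? S j)%nat with false.
    + exact (Rmult_0_l _).
    + symmetry; apply Nat.eqb_neq; lia.
Qed.

Lemma incl_of_inspan lam g : inspan lam g -> incl lam g.
Proof.
  intros H eps Heps. exists g. split; auto. intros x _.
  rewrite Rminus_diag, Rabs_R0. auto.
Qed.

Lemma incl_ext lam g g' : incl lam g -> (forall x, 0 <= x <= 1 -> g' x = g x) ->
  incl lam g'.
Proof.
  intros H E eps Heps. destruct (H eps Heps) as [h [Hh Hb]].
  exists h. split; auto. intros x Hx. rewrite E by auto. auto.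
Qed.

Lemma incl_closed lam g :
  (forall eps, 0 < eps -> exists h, incl lam h /\ forall x, 0 <= x <= 1 -> Rabs (g x - h x) < eps) ->
  incl lam g.
Proof.
  intros H eps Heps.
  destruct (H (eps/2)) as [h [Hh Hb]]; [lra|].
  destruct (Hh (eps/2)) as [k [Hk Hb2]]; [lra|].
  exists k. split; auto. intros x Hx.
  specialize (Hb x Hx). specialize (Hb2 x Hx).
  replace (g x - k x) with ((g x - h x) + (h x - k x)) by ring.
  eapply Rle_lt_trans. apply Rabs_triang. lra.
Qed.

Lemma incl_plus lam g1 g2 : incl lam g1 -> incl lam g2 -> incl lam (fun x => g1 x + g2 x).
Proof.
  intros H1 H2 eps Heps.
  destruct (H1 (eps/2)) as [h1 [Hh1 B1]]; [lra|].
  destruct (H2 (eps/2)) as [h2 [Hh2 B2]]; [lra|].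
  exists (fun x => h1 x + h2 x). split. apply inspan_plus; auto.
  intros x Hx. specialize (B1 x Hx). specialize (B2 x Hx).
  replace (g1 x + g2 x - (h1 x + h2 x)) with ((g1 x - h1 x) + (g2 x - h2 x)) by ring.
  eapply Rle_lt_trans. apply Rabs_triang. lra.
Qed.

Lemma incl_scal lam g a : incl lam g -> incl lam (fun x => a * g x).
Proof.
  intros H eps Heps.
  assert (Ha : 0 < Rabs a + 1) by (pose proof (Rabs_pos a); lra).
  destruct (H (eps / (Rabs a + 1))) as [h [Hh B]].
  { apply Rdiv_lt_0_compat; lra. }
  exists (fun x => a * h x). split. apply inspan_scal; auto.
  intros x Hx. specialize (B x Hx).
  replace (a * g x - a * h x) with (a * (g x - h x)) by ring.
  rewrite Rabs_mult.
  apply Rle_lt_trans with ((Rabs a + 1) * Rabs (g x - h x)).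
  { apply Rmult_le_compat_r. apply Rabs_pos. lra. }
  apply Rmult_lt_reg_l with (/ (Rabs a + 1)). apply Rinv_0_lt_compat; lra.
  rewrite <- Rmult_assoc, Rinv_l by lra. rewrite Rmult_1_l.
  rewrite Rmult_comm. exact B.
Qed.

Lemma incl_sum lam (g : nat -> R -> R) n :
  (forall k, (k <= n)%nat -> incl lam (g k)) ->
  incl lam (fun x => sum_f_R0 (fun k => g k x) n).
Proof.
  induction n as [|n IH]; intros H.
  - simpl. apply H. lia.
  - simpl. apply incl_plus. apply IH. intros k Hk; apply H; lia. apply H; lia.
Qed.


Lemma is_derive_sumf (f : nat -> R -> R) (df : nat -> R) n t :
  (forall k, (k <= n)%nat -> is_derive (f k) t (df k)) ->
  is_derive (fun y => sum_f_R0 (fun k => f k y) n) t (sum_f_R0 df n).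
Proof.
  induction n as [|n IH]; intros H.
  - simpl. apply H. lia.
  - simpl. apply (is_derive_plus (fun y => sum_f_R0 (fun k => f k y) n) (f (S n))).
    apply IH. intros k Hk; apply H; lia. apply H; lia.
Qed.

Lemma is_derive_Rpower a t : 0 < t -> is_derive (fun y => Rpower y a) t (a * Rpower t (a - 1)).
Proof. intros Ht. apply is_derive_Reals. apply derivable_pt_lim_power. exact Ht. Qed.

Lemma Rpower_1_l y : Rpower 1 y = 1.
Proof. unfold Rpower. rewrite ln_1, Rmult_0_r, exp_0. reflexivity. Qed.

Lemma Rpower_pos x y : 0 < Rpower x y.
Proof. unfold Rpower. apply exp_pos. Qed.

Lemma xpow_pos_eq a x : 0 < x -> xpow a x = Rpower x a.
Proof. intros H. unfold xpow. destruct (Rle_dec x 0); [lra|reflexivity]. Qed.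

Lemma xpow_0 a : xpow a 0 = 0.
Proof. unfold xpow. destruct (Rle_dec 0 0); [reflexivity|lra]. Qed.

Lemma xpow_le1 a x : 0 < a -> 0 <= x <= 1 -> 0 <= xpow a x <= 1.
Proof.
  intros Ha Hx. unfold xpow. destruct (Rle_dec x 0). lra.
  split. left; apply Rpower_pos.
  unfold Rpower. rewrite <- exp_0.
  destruct (Req_dec x 1) as [->|Hne]. rewrite ln_1, Rmult_0_r. lra.
  left. apply exp_increasing.
  assert (ln x < 0). { rewrite <- ln_1. apply ln_increasing; lra. }
  nra.
Qed.

Section Muntz.
Variable mu : R.
Variable nu : nat -> R.

Definition beta (i : nat) : R := match i with O => mu | S _ => nu i end.
Definition rr (k i : nat) : R := (mu - nu (S k)) / (beta i - nu (S k)).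

Fixpoint bco (k : nat) : nat -> R :=
  match k with
  | O => fun i => match i with O => 1 | S _ => 0 end
  | S k' => fun i => if (i <=? k')%nat then bco k' i * rr k' i
                     else if (i =? S k')%nat then - sum_f_R0 (fun j => bco k' j * rr k' j) k'
                     else 0
  end.

Definition Qf (k : nat) (x : R) : R := sum_f_R0 (fun i => bco k i * xpow (beta i) x) k.

Fixpoint Pr (k : nat) : R :=
  match k with O => 1 | S k' => Pr k' * Rabs (1 - mu / nu (S k')) end.

Lemma bco_top k : bco (S k) (S k) = - sum_f_R0 (fun j => bco k j * rr k j) k.
Proof.
  change (bco (S k) (S k)) with (if (S k <=? k)%nat then bco k (S k) * rr k (S k)
    else if (S k =? S k)%nat then - sum_f_R0 (fun j => bco k j * rr k j) k else 0).
  replace (S k <=? k)%nat with false by (symmetry; apply Nat.leb_gt; lia).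
  rewrite Nat.eqb_refl. reflexivity.
Qed.

Lemma bco_low k i : (i <= k)%nat -> bco (S k) i = bco k i * rr k i.
Proof.
  intros Hi.
  change (bco (S k) i) with (if (i <=? k)%nat then bco k i * rr k i
    else if (i =? S k)%nat then - sum_f_R0 (fun j => bco k j * rr k j) k else 0).
  replace (i <=? k)%nat with true by (symmetry; apply Nat.leb_le; lia). reflexivity.
Qed.

Lemma Qf_S k x : Qf (S k) x =
  sum_f_R0 (fun i => bco k i * rr k i * (xpow (beta i) x - xpow (nu (S k)) x)) k.
Proof.
  unfold Qf. rewrite tech5.
  rewrite (sum_eq _ (fun i => bco k i * rr k i * xpow (beta i) x)).
  2:{ intros i Hi. rewrite bco_low by auto. reflexivity. }
  rewrite bco_top.
  rewrite (sum_eq (fun i => bco k i * rr k i * (xpow (beta i) x - xpow (nu (S k)) x))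
     (fun i => bco k i * rr k i * xpow (beta i) x - bco k i * rr k i * xpow (nu (S k)) x))
     by (intros; ring).
  rewrite minus_sum.
  rewrite <- (scal_sum (fun i => bco k i * rr k i) k (xpow (nu (S k)) x)).
  simpl beta. ring.
Qed.

Hypothesis mu_pos : 0 < mu.
Hypothesis nu_pos : forall k, (1 <= k)%nat -> 0 < nu k.
Hypothesis nu_ne_mu : forall k, (1 <= k)%nat -> nu k <> mu.
Hypothesis nu_inj : forall i j, (1 <= i)%nat -> (1 <= j)%nat -> i <> j -> nu i <> nu j.

Lemma beta_ne k i : (i <= k)%nat -> beta i - nu (S k) <> 0.
Proof.
  intros Hi. destruct i as [|i]; simpl.
  - intros E. apply (nu_ne_mu (S k)). lia. lra.
  - intros E. apply (nu_inj (S i) (S k)); try lia. lra.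
Qed.

Lemma bco_0 k : bco k 0 = 1.
Proof.
  induction k as [|k IH]; simpl. reflexivity.
  rewrite IH. unfold rr. simpl. field.
  intros E. apply (nu_ne_mu (S k)). lia. lra.
Qed.

Lemma rr_mul k i : (i <= k)%nat -> rr k i * (beta i - nu (S k)) = mu - nu (S k).
Proof. intros Hi. unfold rr. field. apply beta_ne; auto. Qed.

Lemma Qf_step k M : 0 <= M -> (forall x, 0 <= x <= 1 -> Rabs (Qf k x) <= M) ->
  forall x, 0 <= x <= 1 -> Rabs (Qf (S k) x) <= Rabs (1 - mu / nu (S k)) * M.
Proof.
  intros HM HQ x Hx.
  set (v := nu (S k)).
  assert (Hv : 0 < v) by (apply nu_pos; lia).
  destruct (Req_dec x 0) as [->|Hx0].
  { rewrite Qf_S. rewrite (sum_eq _ (fun _ => 0)).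
    - rewrite sum_cte. rewrite Rmult_0_l, Rabs_R0. apply Rmult_le_pos; auto. apply Rabs_pos.
    - intros i _. rewrite !xpow_0. ring. }
  assert (Hxp : 0 < x) by lra.
  set (b := fun i => bco k i * rr k i).
  set (Rf := fun t => sum_f_R0 (fun i => b i * (Rpower t (beta i - v) - 1)) k).
  set (W := fun t => Rabs (mu - v) * M * (Rpower t (- v) - 1) / v).
  assert (HQR : forall t, 0 < t -> Qf (S k) t = Rpower t v * Rf t).
  { intros t Ht. rewrite Qf_S. unfold Rf. rewrite scal_sum. apply sum_eq. intros i Hi.
    rewrite !xpow_pos_eq by auto. fold v. unfold b.
    replace (beta i) with (v + (beta i - v)) at 1 by ring.
    rewrite Rpower_plus. ring. }
  assert (HdR : forall t, 0 < t -> is_derive Rf t ((mu - v) * Rpower t (- v - 1) * Qf k t)).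
  { intros t Ht. unfold Rf.
    assert (E : (mu - v) * Rpower t (- v - 1) * Qf k t =
       sum_f_R0 (fun i => b i * ((beta i - v) * Rpower t (beta i - v - 1))) k).
    { unfold Qf. rewrite scal_sum. apply sum_eq. intros i Hi.
      unfold b.
      replace (bco k i * rr k i * ((beta i - v) * Rpower t (beta i - v - 1))) with
        (bco k i * (rr k i * (beta i - nu (S k))) * Rpower t (beta i - v - 1)) by (unfold v; ring).
      rewrite rr_mul by auto.
      fold v. rewrite xpow_pos_eq by auto.
      replace (beta i - v - 1) with ((- v - 1) + beta i) by ring.
      rewrite Rpower_plus. ring. }
    rewrite E. apply is_derive_sumf. intros i Hi.
    apply is_derive_scal.
    apply (is_derive_ext (fun y => Rpower y (beta i - v) + (-1))).
    { intros; fixR; ring. }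
    replace ((beta i - v) * Rpower t (beta i - v - 1)) with
      ((beta i - v) * Rpower t (beta i - v - 1) + 0) by ring.
    apply (is_derive_plus (fun y => Rpower y (beta i - v)) (fun _ => -1)).
    apply is_derive_Rpower; auto. exact (@is_derive_const R_AbsRing R_NormedModule (-1) t). }
  assert (HdW : forall t, 0 < t -> is_derive W t (- Rabs (mu - v) * M * Rpower t (- v - 1))).
  { intros t Ht. unfold W.
    apply (is_derive_ext (fun y => (Rabs (mu - v) * M / v) * (Rpower y (- v) + (-1)))).
    { intros; fixR; field; lra. }
    replace (- Rabs (mu - v) * M * Rpower t (- v - 1)) with
      ((Rabs (mu - v) * M / v) * (- v * Rpower t (- v - 1) + 0)) by (field; lra).
    apply is_derive_scal.
    apply (is_derive_plus (fun y => Rpower y (- v)) (fun _ => -1)).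
    apply is_derive_Rpower; auto. exact (@is_derive_const R_AbsRing R_NormedModule (-1) t). }
  assert (Hbound : forall s, s = 1 \/ s = -1 -> s * Rf x <= W x).
  { intros s Hs.
    set (phi := fun t => W t - s * Rf t).
    set (dphi := fun t => - Rabs (mu - v) * M * Rpower t (- v - 1) - s * ((mu - v) * Rpower t (- v - 1) * Qf k t)).
    assert (Hdphi : forall t, 0 < t -> is_derive phi t (dphi t)).
    { intros t Ht. unfold phi, dphi.
      apply (is_derive_minus W (fun t => s * Rf t)). apply HdW; auto.
      apply is_derive_scal. apply HdR; auto. }
    assert (Hneg : forall t, 0 < t <= 1 -> dphi t <= 0).
    { intros t Ht. unfold dphi.
      assert (Hp := Rpower_pos t (- v - 1)).
      assert (HQt := HQ t ltac:(lra)).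
      assert (Rabs (s * ((mu - v) * Qf k t)) <= Rabs (mu - v) * M).
      { assert (Habs : Rabs s = 1).
        { destruct Hs as [-> | ->]. apply Rabs_R1. rewrite Rabs_left; lra. }
        rewrite !Rabs_mult, Habs, Rmult_1_l. apply Rmult_le_compat_l. apply Rabs_pos. auto. }
      assert (s * ((mu - v) * Qf k t) >= - (Rabs (mu - v) * M)).
      { pose proof (Rle_abs (- (s * ((mu - v) * Qf k t)))). rewrite Rabs_Ropp in H0. lra. }
      replace (- Rabs (mu - v) * M * Rpower t (- v - 1) - s * ((mu - v) * Rpower t (- v - 1) * Qf k t))
        with (- Rpower t (- v - 1) * (Rabs (mu - v) * M + s * ((mu - v) * Qf k t))) by ring.
      nra. }
    destruct (Req_dec x 1) as [->|Hx1].
    { unfold Rf, W. rewrite (sum_eq _ (fun _ => 0)).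
      - rewrite sum_cte, Rpower_1_l. lra.
      - intros i _. rewrite Rpower_1_l. ring. }
    destruct (MVT_gen phi x 1 dphi) as [c [Hc Hmvt]].
    - intros t Ht. apply Hdphi. rewrite Rmin_left in Ht by lra. lra.
    - intros t Ht. rewrite Rmin_left in Ht by lra.
      apply derivable_continuous_pt. exists (dphi t). apply is_derive_Reals. apply Hdphi. lra.
    - rewrite Rmin_left, Rmax_right in Hc by lra.
      assert (Hd := Hneg c ltac:(lra)).
      assert (phi 1 = 0).
      { unfold phi, Rf, W. rewrite (sum_eq _ (fun _ => 0)).
        - rewrite sum_cte, Rpower_1_l. unfold Rdiv. ring_simplify. reflexivity.
        - intros i _. rewrite Rpower_1_l. ring. }
      assert (phi x >= 0) by nra.
      unfold phi in H0. lra. }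
  assert (HRabs : Rabs (Rf x) <= W x).
  { pose proof (Hbound 1 (or_introl eq_refl)). pose proof (Hbound (-1) (or_intror eq_refl)).
    apply Rabs_le. lra. }
  rewrite HQR by auto. rewrite Rabs_mult, (Rabs_pos_eq (Rpower x v)) by (left; apply Rpower_pos).
  apply Rle_trans with (Rpower x v * W x).
  { apply Rmult_le_compat_l. left; apply Rpower_pos. auto. }
  unfold W.
  assert (E : Rpower x v * (Rabs (mu - v) * M * (Rpower x (- v) - 1) / v) =
     (Rabs (mu - v) / v) * M * (1 - Rpower x v)).
  { replace (Rpower x v * (Rabs (mu - v) * M * (Rpower x (- v) - 1) / v)) with
      ((Rabs (mu - v) / v) * M * (Rpower x v * Rpower x (-v) - Rpower x v)) by (field; lra).
    rewrite <- Rpower_plus. replace (v + - v) with 0 by ring. rewrite Rpower_O by auto. ring. }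
  rewrite E.
  assert (E2 : Rabs (mu - v) / v = Rabs (1 - mu / v)).
  { replace (1 - mu / v) with ((v - mu) / v) by (field; lra).
    rewrite Rabs_div by lra. rewrite (Rabs_pos_eq v) by lra.
    rewrite Rabs_minus_sym. reflexivity. }
  rewrite E2.
  assert (0 < Rpower x v) by apply Rpower_pos.
  assert (0 <= Rabs (1 - mu / v) * M) by (apply Rmult_le_pos; auto; apply Rabs_pos).
  nra.
Qed.

Lemma Pr_nonneg k : 0 <= Pr k.
Proof.
  induction k; simpl. lra. apply Rmult_le_pos; auto. apply Rabs_pos.
Qed.

Lemma Qf_bound k : forall x, 0 <= x <= 1 -> Rabs (Qf k x) <= Pr k.
Proof.
  induction k as [|k IH]; intros x Hx.
  - unfold Qf. simpl. pose proof (xpow_le1 mu x mu_pos Hx). rewrite Rmult_1_l.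
    rewrite Rabs_pos_eq; lra.
  - simpl Pr. rewrite Rmult_comm. apply Qf_step; auto. apply Pr_nonneg.
Qed.

Lemma sum_first (a : R) (K : nat) :
  sum_f_R0 (fun i => match i with O => a | S _ => 0 end) K = a.
Proof. induction K; simpl; auto. rewrite IHK. ring. Qed.

Lemma muntz_core lam :
  (forall k, (1 <= k)%nat -> incl lam (xpow (nu k))) ->
  (forall eps, 0 < eps -> exists K, Pr K < eps) ->
  incl lam (xpow mu).
Proof.
  intros Hinc HPr. apply incl_closed. intros eps Heps.
  destruct (HPr eps Heps) as [K HK].
  set (gi := fun i x => match i with O => 0 | S _ => - (bco K i * xpow (nu i) x) end).
  exists (fun x => sum_f_R0 (fun i => gi i x) K). split.
  - apply incl_sum. intros i Hi. destruct i as [|i]; unfold gi.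
    + apply incl_of_inspan. apply inspan_const.
    + apply (incl_ext lam (fun x => (- bco K (S i)) * xpow (nu (S i)) x)).
      apply incl_scal. apply Hinc. lia. intros; ring.
  - intros x Hx.
    assert (E : xpow mu x - sum_f_R0 (fun i => gi i x) K = Qf K x).
    { unfold Qf.
      rewrite (sum_eq (fun i => bco K i * xpow (beta i) x)
        (fun i => (match i with O => xpow mu x | S _ => 0 end) + - gi i x)).
      - rewrite plus_sum, sum_first.
        assert (Hopp : forall K', sum_f_R0 (fun i => - gi i x) K' = - sum_f_R0 (fun i => gi i x) K').
        { induction K'; simpl. ring. rewrite IHK'. ring. }
        rewrite Hopp. ring.
      - intros i Hi. destruct i as [|i]; unfold gi; simpl.
        + rewrite bco_0. ring.
        + ring. }
    rewrite E. eapply Rle_lt_trans. apply Qf_bound; auto. auto.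
Qed.

End Muntz.

Lemma Pr_le_geom mu nu r : 0 <= r -> (forall k, (1 <= k)%nat -> Rabs (1 - mu / nu k) <= r) ->
  forall K, Pr mu nu K <= r ^ K.
Proof.
  intros Hr H K. induction K as [|K IH]; simpl. lra.
  rewrite Rmult_comm. apply Rmult_le_compat. apply Rabs_pos. apply Pr_nonneg.
  apply H; lia. auto.
Qed.

Lemma Pr_le_exp mu nu : (forall k, (1 <= k)%nat -> 0 < mu / nu k <= 1) ->
  forall K, Pr mu nu K <= exp (- mu * sum_n_m (fun i => / nu i) 1 K).
Proof.
  intros H K. induction K as [|K IH].
  - simpl. rewrite sum_n_m_zero by lia. change (@zero R_AbelianMonoid) with 0.
    rewrite Rmult_0_r, exp_0. lra.
  - simpl Pr. rewrite sum_n_Sm by lia. change (@plus R_AbelianMonoid) with Rplus. cbv beta.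
    replace (- mu * (sum_n_m (fun i => / nu i) 1 K + / nu (S K))) with
      (- mu * sum_n_m (fun i => / nu i) 1 K + - (mu / nu (S K))) by (unfold Rdiv; ring).
    rewrite exp_plus. apply Rmult_le_compat. apply Pr_nonneg. apply Rabs_pos. auto.
    specialize (H (S K) ltac:(lia)). rewrite Rabs_pos_eq by lra.
    pose proof (exp_ineq1_le (- (mu / nu (S K)))). lra.
Qed.



Section Boot.
Variable lam : nat -> R.
Hypothesis Hlam_pos : forall i : nat, (1 <= i)%nat -> 0 < lam i.
Hypothesis Hlam_dist : forall i j : nat, (1 <= i)%nat -> (1 <= j)%nat -> i <> j -> lam i <> lam j.
Variable d : R.
Hypothesis Hd : 0 < d.
Hypothesis Hdle : forall i : nat, (1 <= i)%nat -> d <= lam i.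
Hypothesis Hlam_div : is_lim_seq (fun m => sum_n_m (fun i => / lam i) 1 m) p_infty.

Lemma boot1 mu : 0 < mu < d -> incl lam (xpow mu).
Proof.
  intros Hmu. apply (muntz_core mu lam).
  - lra.
  - auto.
  - intros k Hk. specialize (Hdle k Hk). lra.
  - auto.
  - intros k Hk. apply incl_of_inspan. apply inspan_xpow. auto.
  - intros eps Heps.
    apply is_lim_seq_spec in Hlam_div. simpl in Hlam_div.
    destruct (Hlam_div (- ln eps / mu)) as [N HN].
    exists N. eapply Rle_lt_trans. apply Pr_le_exp.
    + intros k Hk. specialize (Hdle k Hk). specialize (Hlam_pos k Hk). split.
      apply Rdiv_lt_0_compat; lra.
      apply Rmult_le_reg_r with (lam k); auto. unfold Rdiv. rewrite Rmult_assoc, Rinv_l by lra. lra.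
    + specialize (HN N (le_n N)).
      rewrite <- (exp_ln eps) by auto. apply exp_increasing.
      apply Rmult_lt_compat_l with (r := mu) in HN; [|lra].
      replace (mu * (- ln eps / mu)) with (- ln eps) in HN by (field; lra). lra.
Qed.

Lemma boot2 a : 0 < a -> (forall v, 0 < v < a -> incl lam (xpow v)) ->
  forall mu, 0 < mu < 3 * a / 2 -> incl lam (xpow mu).
Proof.
  intros Ha H mu Hmu.
  destruct (Rlt_dec mu a) as [Hlt|Hge]. apply H; lra.
  set (nu := fun k : nat => a - a / (8 * (INR k + 1))).
  assert (Hnu : forall k, (1 <= k)%nat -> 15 * a / 16 <= nu k < a).
  { intros k Hk. unfold nu. assert (1 <= INR k) by (apply (le_INR 1); lia).
    split.
    - assert (a / (8 * (INR k + 1)) <= a / 16).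
      { unfold Rdiv. apply Rmult_le_compat_l. lra. apply Rinv_le_contravar; lra. }
      lra.
    - assert (0 < a / (8 * (INR k + 1))) by (apply Rdiv_lt_0_compat; lra). lra. }
  apply (muntz_core mu nu).
  - lra.
  - intros k Hk. specialize (Hnu k Hk). lra.
  - intros k Hk. specialize (Hnu k Hk). lra.
  - intros i j Hi Hj Hij E. apply Hij. unfold nu in E.
    assert (E2 : a / (8 * (INR i + 1)) = a / (8 * (INR j + 1))) by lra.
    assert (0 <= INR i) by apply pos_INR. assert (0 <= INR j) by apply pos_INR.
    assert (INR i = INR j).
    { unfold Rdiv in E2. apply Rmult_eq_reg_l in E2; [|lra].
      apply Rinv_eq_reg in E2. lra. }
    apply INR_eq; auto.
  - intros k Hk. apply H. specialize (Hnu k Hk). lra.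
  - intros eps Heps.
    destruct (pow_lt_1_zero (3/5) ltac:(rewrite Rabs_pos_eq; lra) eps Heps) as [N HN].
    exists N. eapply Rle_lt_trans. apply (Pr_le_geom mu nu (3/5)). lra.
    + intros k Hk. specialize (Hnu k Hk).
      assert (1 <= mu / nu k).
      { apply Rmult_le_reg_r with (nu k). lra. unfold Rdiv. rewrite Rmult_assoc, Rinv_l by lra. lra. }
      assert (mu / nu k <= 8 / 5).
      { apply Rmult_le_reg_r with (nu k). lra. unfold Rdiv. rewrite Rmult_assoc, Rinv_l by lra. lra. }
      rewrite Rabs_left1 by lra. lra.
    + specialize (HN N (le_n N)). rewrite Rabs_pos_eq in HN. auto.
      apply pow_le. lra.
Qed.

Lemma boot3 n : forall mu, 0 < mu < d * (3/2)^n -> incl lam (xpow mu).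
Proof.
  induction n as [|n IH]; intros mu Hmu.
  - simpl in Hmu. apply boot1. lra.
  - apply (boot2 (d * (3/2)^n)).
    + apply Rmult_lt_0_compat; auto. apply pow_lt; lra.
    + auto.
    + simpl in Hmu. lra.
Qed.

Lemma boot_all mu : 0 < mu -> incl lam (xpow mu).
Proof.
  intros Hmu.
  destruct (Pow_x_infinity (3/2) ltac:(rewrite Rabs_pos_eq; lra) (mu / d + 1)) as [N HN].
  specialize (HN N (le_n N)). rewrite Rabs_pos_eq in HN by (apply pow_le; lra).
  apply (boot3 N). split; auto.
  apply Rmult_lt_reg_r with (/ d). apply Rinv_0_lt_compat; auto.
  replace (d * (3 / 2) ^ N * / d) with ((3/2)^N) by (field; lra).
  unfold Rdiv in HN. lra.
Qed.

Lemma incl_mono m : incl lam (fun x => x ^ m).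
Proof.
  destruct m as [|m].
  - apply incl_of_inspan. apply (inspan_ext lam (fun _ => 1)). apply inspan_const.
    intros; simpl; auto.
  - apply (incl_ext lam (xpow (INR (S m)))).
    + apply boot_all. apply lt_0_INR. lia.
    + intros x Hx. destruct (Req_dec x 0) as [->|Hx0].
      * rewrite xpow_0. simpl. ring.
      * rewrite xpow_pos_eq by lra. rewrite Rpower_pow by lra. reflexivity.
Qed.

Lemma incl_bern_basis l : forall k, incl lam (fun x => x ^ k * (1 - x) ^ l).
Proof.
  induction l as [|l IH]; intros k.
  - apply (incl_ext lam (fun x => x ^ k)). apply incl_mono. intros; simpl; ring.
  - apply (incl_ext lam (fun x => x ^ k * (1 - x) ^ l + (-1) * (x ^ (S k) * (1 - x) ^ l))).
    + apply incl_plus. apply IH. apply incl_scal. apply IH.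
    + intros x Hx. simpl. ring.
Qed.

End Boot.


Definition contI (f : R -> R) : Prop :=
  forall x, 0 <= x <= 1 -> forall e, 0 < e -> exists d, 0 < d /\
    forall y, 0 <= y <= 1 -> Rabs (y - x) < d -> Rabs (f y - f x) < e.

Definition clamp (x : R) : R := Rmax 0 (Rmin 1 x).

Lemma clamp_I x : 0 <= clamp x <= 1.
Proof. unfold clamp, Rmax, Rmin. repeat destruct Rle_dec; lra. Qed.

Lemma clamp_id x : 0 <= x <= 1 -> clamp x = x.
Proof. intros. unfold clamp, Rmax, Rmin. repeat destruct Rle_dec; lra. Qed.

Lemma clamp_lip x y : 0 <= x <= 1 -> Rabs (clamp y - x) <= Rabs (y - x).
Proof.
  intros Hx. unfold clamp, Rmax, Rmin. repeat destruct Rle_dec;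
  unfold Rabs; repeat destruct Rcase_abs; lra.
Qed.

Lemma contI_pt f : contI f -> forall x, 0 <= x <= 1 -> continuity_pt (fun y => f (clamp y)) x.
Proof.
  intros Hf x Hx. unfold continuity_pt, continue_in, limit1_in, limit_in. simpl.
  unfold R_dist. intros e He.
  destruct (Hf x Hx e He) as [d [Hd H]].
  exists d. split; auto. intros y [_ Hy].
  rewrite (clamp_id x Hx). apply H. apply clamp_I.
  eapply Rle_lt_trans. apply clamp_lip; auto. auto.
Qed.

Lemma contI_unif f : contI f -> forall e, 0 < e -> exists d, 0 < d /\
  forall x y, 0 <= x <= 1 -> 0 <= y <= 1 -> Rabs (x - y) < d -> Rabs (f x - f y) < e.
Proof.
  intros Hf e He.
  destruct (Heine (fun y => f (clamp y)) (fun c => 0 <= c <= 1) (compact_P3 0 1)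
    (contI_pt f Hf) (mkposreal e He)) as [d Hd].
  exists d. split. apply cond_pos. intros x y Hx Hy Hxy.
  specialize (Hd x y Hx Hy Hxy). simpl in Hd. rewrite !clamp_id in Hd by auto. auto.
Qed.

Lemma contI_bnd f : contI f -> exists B, 0 <= B /\ forall x, 0 <= x <= 1 -> Rabs (f x) <= B.
Proof.
  intros Hf.
  destruct (continuity_ab_maj (fun y => f (clamp y)) 0 1 ltac:(lra) (contI_pt f Hf)) as [M [HM _]].
  destruct (continuity_ab_min (fun y => f (clamp y)) 0 1 ltac:(lra) (contI_pt f Hf)) as [m [Hm _]].
  exists (Rabs (f (clamp M)) + Rabs (f (clamp m))). split.
  pose proof (Rabs_pos (f (clamp M))); pose proof (Rabs_pos (f (clamp m))); lra.
  intros x Hx. specialize (HM x Hx). specialize (Hm x Hx). simpl in *.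
  rewrite (clamp_id x Hx) in HM, Hm.
  unfold Rabs in *. repeat destruct Rcase_abs; lra.
Qed.

Lemma kor_pt f B e d : 0 <= B -> 0 < d -> (forall x, 0 <= x <= 1 -> Rabs (f x) <= B) ->
  (forall x y, 0 <= x <= 1 -> 0 <= y <= 1 -> Rabs (x - y) < d -> Rabs (f x - f y) < e) ->
  forall t x, 0 <= t <= 1 -> 0 <= x <= 1 ->
  Rabs (f t - f x) <= e + 2 * B / (d * d) * ((t - x) * (t - x)).
Proof.
  intros HB Hd Hb Hu t x Ht Hx.
  assert (He : 0 <= 2 * B / (d * d) * ((t - x) * (t - x))).
  { apply Rmult_le_pos. apply Rdiv_le_0_compat. lra. apply Rmult_lt_0_compat; lra. pose proof (Rle_0_sqr (t - x)); unfold Rsqr in *; lra. }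
  destruct (Rlt_dec (Rabs (t - x)) d) as [Hl|Hl].
  - specialize (Hu t x Ht Hx Hl). lra.
  - assert (d * d <= (t - x) * (t - x)).
    { apply Rnot_lt_le in Hl.
      assert (Rabs (t - x) * Rabs (t - x) = (t - x) * (t - x)).
      { rewrite <- Rabs_mult. apply Rabs_pos_eq. pose proof (Rle_0_sqr (t - x)); unfold Rsqr in *; lra. }
      rewrite <- H. apply Rmult_le_compat; lra. }
    assert (2 * B <= 2 * B / (d * d) * ((t - x) * (t - x))).
    { replace (2 * B) with (2 * B / (d * d) * (d * d)) at 1 by (field; lra).
      apply Rmult_le_compat_l. apply Rdiv_le_0_compat. lra. apply Rmult_lt_0_compat; lra. auto. }
    assert (Rabs (f t - f x) <= 2 * B).
    { eapply Rle_trans. apply Rabs_triang. rewrite Rabs_Ropp.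
      pose proof (Hb t Ht). pose proof (Hb x Hx). lra. }
    assert (0 <= e \/ e < 0) by lra.
    destruct H2.
    + lra.
    + (* e negative: impossible since Hu gives |.| < e at t = x *)
      specialize (Hu x x Hx Hx). rewrite Rminus_diag, Rabs_R0 in Hu.
      assert (0 < d) by auto. specialize (Hu Hd). rewrite Rminus_diag, Rabs_R0 in Hu. lra.
Qed.

Lemma C_shift m i : (i <= m)%nat ->
  Binomial.C (S m) (S i) * INR (S i) = INR (S m) * Binomial.C m i.
Proof.
  intros Hi. unfold Binomial.C.
  replace (S m - S i)%nat with (m - i)%nat by lia.
  rewrite !fact_simpl, !mult_INR.
  field. split; [apply INR_fact_neq_0|]. split; [apply INR_fact_neq_0|].
  apply not_0_INR; lia.
Qed.

Definition bw (n : nat) (x : R) (k : nat) : R := Binomial.C n k * x ^ k * (1 - x) ^ (n - k).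

Lemma bw_S0 n x : sum_f_R0 (bw n x) n = 1.
Proof.
  unfold bw. rewrite <- binomial. replace (x + (1 - x)) with 1 by ring. apply pow1.
Qed.

Lemma sum_scal_l (a : nat -> R) c N : sum_f_R0 (fun i => c * a i) N = c * sum_f_R0 a N.
Proof. induction N; simpl. ring. rewrite IHN. ring. Qed.

Lemma sum_shift_S (a : nat -> R) m : a O = 0 ->
  sum_f_R0 a (S m) = sum_f_R0 (fun i => a (S i)) m.
Proof.
  intros H0. rewrite decomp_sum by lia. rewrite H0. simpl. ring.
Qed.

Lemma bw_S1 n x : sum_f_R0 (fun k => bw n x k * INR k) n = INR n * x.
Proof.
  destruct n as [|m]. { simpl. ring. }
  rewrite sum_shift_S by (simpl; ring).
  rewrite (sum_eq _ (fun i => INR (S m) * x * bw m x i)).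
  - rewrite sum_scal_l. rewrite bw_S0. ring.
  - intros i Hi. unfold bw. replace (S m - S i)%nat with (m - i)%nat by lia.
    replace (Binomial.C (S m) (S i) * x ^ S i * (1 - x) ^ (m - i) * INR (S i)) with
      ((Binomial.C (S m) (S i) * INR (S i)) * x ^ S i * (1 - x) ^ (m - i)) by ring.
    rewrite C_shift by auto. simpl. ring.
Qed.

Lemma bw_S2 n x : sum_f_R0 (fun k => bw n x k * (INR k * INR k)) n =
  INR n * (INR n - 1) * x * x + INR n * x.
Proof.
  destruct n as [|m]. { simpl. ring. }
  rewrite sum_shift_S by (simpl; ring).
  rewrite (sum_eq _ (fun i => INR (S m) * x * (bw m x i * INR i + bw m x i))).
  - rewrite sum_scal_l. rewrite plus_sum, bw_S1, bw_S0. rewrite S_INR. ring.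
  - intros i Hi. unfold bw. replace (S m - S i)%nat with (m - i)%nat by lia.
    replace (Binomial.C (S m) (S i) * x ^ S i * (1 - x) ^ (m - i) * (INR (S i) * INR (S i))) with
      ((Binomial.C (S m) (S i) * INR (S i)) * x ^ S i * (1 - x) ^ (m - i) * INR (S i)) by ring.
    rewrite C_shift by auto. rewrite (S_INR i). simpl. ring.
Qed.

Lemma C_nonneg n k : 0 <= Binomial.C n k.
Proof.
  unfold Binomial.C. apply Rdiv_le_0_compat. apply pos_INR.
  apply Rmult_lt_0_compat; apply lt_0_INR; apply lt_O_fact.
Qed.

Lemma bw_nonneg n x k : 0 <= x <= 1 -> 0 <= bw n x k.
Proof.
  intros Hx. unfold bw. apply Rmult_le_pos. apply Rmult_le_pos. apply C_nonneg.
  apply pow_le; lra. apply pow_le; lra.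
Qed.

Definition Bern (n : nat) (f : R -> R) (x : R) : R :=
  sum_f_R0 (fun k => bw n x k * f (INR k / INR n)) n.

Lemma sum_lin3 (u v w : nat -> R) a b c N :
  sum_f_R0 (fun k => a * u k + b * v k + c * w k) N =
  a * sum_f_R0 u N + b * sum_f_R0 v N + c * sum_f_R0 w N.
Proof. induction N; simpl. ring. rewrite IHN. ring. Qed.

Lemma bern_var n x : (1 <= n)%nat -> 0 <= x <= 1 ->
  sum_f_R0 (fun k => bw n x k * ((INR k / INR n - x) * (INR k / INR n - x))) n <= 1 / INR n.
Proof.
  intros Hn Hx.
  assert (Hn' : 0 < INR n) by (apply lt_0_INR; lia).
  rewrite (sum_eq _ (fun k => (/ (INR n * INR n)) * (bw n x k * (INR k * INR k)) +
     (- 2 * x / INR n) * (bw n x k * INR k) + (x * x) * bw n x k)).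
  2:{ intros; field; lra. }
  rewrite sum_lin3, bw_S2, bw_S1, bw_S0.
  replace (/ (INR n * INR n) * (INR n * (INR n - 1) * x * x + INR n * x) +
    - 2 * x / INR n * (INR n * x) + x * x * 1) with (x * (1 - x) / INR n) by (field; lra).
  unfold Rdiv. apply Rmult_le_compat_r. left; apply Rinv_0_lt_compat; auto. nra.
Qed.

Lemma bern_approx f : contI f -> forall eps, 0 < eps -> exists n, (1 <= n)%nat /\
  forall x, 0 <= x <= 1 -> Rabs (f x - Bern n f x) < eps.
Proof.
  intros Hf eps Heps.
  destruct (contI_bnd f Hf) as [B [HB Hb]].
  destruct (contI_unif f Hf (eps / 2)) as [d [Hd Hu]]; [lra|].
  set (K := 2 * B / (d * d)).
  assert (HK : 0 <= K) by (unfold K; apply Rdiv_le_0_compat; [lra| apply Rmult_lt_0_compat; lra]).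
  destruct (INR_unbounded (2 * K / eps)) as [n0 Hn0].
  set (n := S n0).
  assert (Hn : 0 < INR n) by (apply lt_0_INR; unfold n; lia).
  assert (HnK : K / INR n < eps / 2).
  { unfold n. rewrite S_INR.
    apply Rmult_lt_reg_r with (INR n0 + 1). pose proof (pos_INR n0); lra.
    unfold Rdiv. rewrite Rmult_assoc, Rinv_l by (pose proof (pos_INR n0); lra).
    apply Rmult_lt_reg_l with (2 / eps). apply Rdiv_lt_0_compat; lra.
    replace (2 / eps * (K * 1)) with (2 * K / eps) by (field; lra).
    replace (2 / eps * (eps * / 2 * (INR n0 + 1))) with (INR n0 + 1) by (field; lra).
    lra. }
  exists n. split. unfold n; lia.
  intros x Hx.
  assert (E : f x - Bern n f x = sum_f_R0 (fun k => bw n x k * (f x - f (INR k / INR n))) n).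
  { unfold Bern. symmetry. rewrite (sum_eq _ (fun k => f x * bw n x k - bw n x k * f (INR k / INR n))) by (intros; ring).
    rewrite minus_sum, sum_scal_l, bw_S0. ring. }
  rewrite E. eapply Rle_lt_trans. apply sum_f_R0_triangle.
  eapply Rle_lt_trans.
  { apply (sum_Rle _ (fun k => eps / 2 * bw n x k + K * (bw n x k * ((INR k / INR n - x) * (INR k / INR n - x))))).
    intros k Hk. rewrite Rabs_mult, (Rabs_pos_eq (bw n x k)) by (apply bw_nonneg; auto).
    assert (Hkn : 0 <= INR k / INR n <= 1).
    { split. apply Rdiv_le_0_compat; auto. apply pos_INR.
      apply Rmult_le_reg_r with (INR n); auto. unfold Rdiv. rewrite Rmult_assoc, Rinv_l by lra.
      rewrite Rmult_1_r, Rmult_1_l. apply le_INR; auto. }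
    pose proof (kor_pt f B (eps / 2) d HB Hd Hb Hu (INR k / INR n) x Hkn Hx).
    rewrite Rabs_minus_sym. fold K in H.
    pose proof (bw_nonneg n x k Hx). nra. }
  rewrite plus_sum, !sum_scal_l, bw_S0.
  pose proof (bern_var n x ltac:(unfold n; lia) Hx).
  assert (K * sum_f_R0 (fun k => bw n x k * ((INR k / INR n - x) * (INR k / INR n - x))) n <= K / INR n).
  { unfold Rdiv. replace (K * / INR n) with (K * (1 / INR n)) by (field; lra).
    apply Rmult_le_compat_l; auto. }
  lra.
Qed.

Lemma incl_bern lam f n :
  (forall i : nat, (1 <= i)%nat -> 0 < lam i) ->
  (forall i j : nat, (1 <= i)%nat -> (1 <= j)%nat -> i <> j -> lam i <> lam j) ->
  (exists d : R, 0 < d /\ forall i : nat, (1 <= i)%nat -> d <= lam i) ->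
  is_lim_seq (fun m => sum_n_m (fun i => / lam i) 1 m) p_infty ->
  incl lam (Bern n f).
Proof.
  intros H1 H2 [d [Hd H3]] H4. unfold Bern.
  apply incl_sum. intros k Hk.
  apply (incl_ext lam (fun x => (Binomial.C n k * f (INR k / INR n)) * (x ^ k * (1 - x) ^ (n - k)))).
  - apply incl_scal. apply (incl_bern_basis lam H1 H2 d Hd H3 H4).
  - intros x Hx. unfold bw. ring.
Qed.

Lemma muntz_dense lam f :
  (forall i : nat, (1 <= i)%nat -> 0 < lam i) ->
  (forall i j : nat, (1 <= i)%nat -> (1 <= j)%nat -> i <> j -> lam i <> lam j) ->
  (exists d : R, 0 < d /\ forall i : nat, (1 <= i)%nat -> d <= lam i) ->
  is_lim_seq (fun m => sum_n_m (fun i => / lam i) 1 m) p_infty ->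
  contI f -> incl lam f.
Proof.
  intros H1 H2 H3 H4 Hf. apply incl_closed. intros eps Heps.
  destruct (bern_approx f Hf eps Heps) as [n [_ Hn]].
  exists (Bern n f). split; auto. apply incl_bern; auto.
Qed.


Lemma exR_scal c (a : nat -> R) : ex_series a -> ex_series (fun n => c * a n).
Proof. intros H. exact (ex_series_scal_l c a H). Qed.
Lemma exR_plus (a b : nat -> R) : ex_series a -> ex_series b -> ex_series (fun n => a n + b n).
Proof. intros H1 H2. exact (ex_series_plus a b H1 H2). Qed.
Lemma exR_le (a b : nat -> R) : (forall n, Rabs (a n) <= b n) -> ex_series b -> ex_series a.
Proof. intros H1 H2. apply (ex_series_le a b); auto. Qed.
Lemma exR_ext (a b : nat -> R) : (forall n, a n = b n) -> ex_series a -> ex_series b.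
Proof. intros H1 H2. exact (ex_series_ext a b H1 H2). Qed.
Lemma exR_S (a : nat -> R) : ex_series a -> ex_series (fun k => a (S k)).
Proof. intros H. exact (proj1 (ex_series_incr_1 a) H). Qed.
Lemma exR_unS (a : nat -> R) : ex_series (fun k => a (S k)) -> ex_series a.
Proof. intros H. exact (proj2 (ex_series_incr_1 a) H). Qed.

Lemma Series_nonneg (a : nat -> R) : (forall n, 0 <= a n) -> ex_series a -> 0 <= Series a.
Proof.
  intros H Hex.
  replace 0 with (Series (fun n => 0 * a n)) by (rewrite Series_scal_l; ring).
  apply Series_le; auto. intros n. rewrite Rmult_0_l. split. lra. auto.
Qed.

Lemma Series_mono (a b : nat -> R) : (forall n, a n <= b n) -> ex_series a -> ex_series b ->
  Series a <= Series b.
Proof.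
  intros H Ha Hb.
  assert (0 <= Series (fun n => b n - a n)).
  { apply Series_nonneg. intros n; specialize (H n); lra.
    apply (exR_ext (fun n => b n + (-1) * a n)). intros; ring. apply exR_plus; auto. apply exR_scal; auto. }
  rewrite Series_minus in H0 by auto. lra.
Qed.

Lemma partial_le_Series (a : nat -> R) K : (forall n, 0 <= a n) -> ex_series a ->
  sum_f_R0 a K <= Series a.
Proof.
  intros H Hex. rewrite (Series_incr_n a (S K)) by (auto; lia). simpl pred.
  assert (0 <= Series (fun k => a (S K + k)%nat)).
  { apply Series_nonneg. auto.
    clear H. induction (S K) as [|j IH]. simpl. apply (exR_ext a). auto. auto.
    apply (exR_ext (fun k => a (j + S k)%nat)). intros; f_equal; lia.
    exact (exR_S (fun k => a (j + k)%nat) IH). }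
  lra.
Qed.

Lemma qint_0 q : qint q 0 = 0.
Proof. unfold qint. destruct (Req_EM_T q 1). simpl. ring. simpl. unfold Rdiv. ring. Qed.

Lemma qint_S q k : qint q (S k) = 1 + q * qint q k.
Proof.
  unfold qint. destruct (Req_EM_T q 1) as [->|Hq].
  - rewrite S_INR. ring.
  - simpl. field. intros E. apply Hq. lra.
Qed.

Lemma qint_add q a b : qint q (a + b) = qint q a + q ^ a * qint q b.
Proof.
  induction a as [|a IH]; cbn [Nat.add].
  - rewrite qint_0. simpl. ring.
  - rewrite !qint_S, IH. simpl. ring.
Qed.

Lemma qint_nonneg q k : 0 < q -> 0 <= qint q k.
Proof.
  intros Hq. induction k. rewrite qint_0. lra. rewrite qint_S. nra.
Qed.

Lemma qint_pos q k : 0 < q -> (1 <= k)%nat -> 0 < qint q k.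
Proof.
  intros Hq Hk. destruct k. lia. rewrite qint_S. pose proof (qint_nonneg q k Hq). nra.
Qed.

Lemma qint_mono q a b : 0 < q -> (a <= b)%nat -> qint q a <= qint q b.
Proof.
  intros Hq Hab. replace b with (a + (b - a))%nat by lia. rewrite qint_add.
  pose proof (qint_nonneg q (b - a) Hq). pose proof (pow_le q a ltac:(lra)). nra.
Qed.

Lemma qfact_pos q n : 0 < q -> 0 < qfact q n.
Proof.
  intros Hq. induction n; simpl. lra. apply Rmult_lt_0_compat; auto. apply qint_pos; auto; lia.
Qed.

Lemma qbinom_eq q n k : qbinom q (n + k) k = qfact q (n + k) / (qfact q k * qfact q n).
Proof. unfold qbinom. replace (n + k - k)%nat with n by lia. reflexivity. Qed.

Lemma qbinom_pos q n k : 0 < q -> 0 < qbinom q (n + k) k.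
Proof.
  intros Hq. rewrite qbinom_eq. apply Rdiv_lt_0_compat. apply qfact_pos; auto.
  apply Rmult_lt_0_compat; apply qfact_pos; auto.
Qed.

Lemma qbinom_n0 q n : 0 < q -> qbinom q (n + 0) 0 = 1.
Proof.
  intros Hq. rewrite qbinom_eq. rewrite Nat.add_0_r. simpl. field.
  pose proof (qfact_pos q n Hq). lra.
Qed.

Lemma qbinom_0k q k : 0 < q -> qbinom q (0 + k) k = 1.
Proof.
  intros Hq. rewrite qbinom_eq. simpl. field. pose proof (qfact_pos q k Hq). lra.
Qed.

Lemma qbinom_pascal q n k : 0 < q ->
  qbinom q (S n + S k) (S k) = qbinom q (n + S k) (S k) + q ^ (S n) * qbinom q (S n + k) k.
Proof.
  intros Hq. rewrite !qbinom_eq.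
  replace (S n + S k)%nat with (S (n + S k)) by lia.
  replace (S n + k)%nat with (n + S k)%nat by lia.
  simpl qfact.
  assert (E : qint q (S (n + S k)) = qint q (S n) + q ^ (S n) * qint q (S k)).
  { replace (S (n + S k)) with (S n + S k)%nat by lia. apply qint_add. }
  replace (S (n + S k)) with (S (n + S k)) by reflexivity.
  rewrite E.
  assert (0 < qfact q n) by (apply qfact_pos; auto).
  assert (0 < qfact q k) by (apply qfact_pos; auto).
  assert (0 < qint q (S n)) by (apply qint_pos; auto; lia).
  assert (0 < qint q (S k)) by (apply qint_pos; auto; lia).
  field. repeat split; lra.
Qed.

Lemma qbinom_shift q n k : 0 < q ->
  qbinom q (n + S k) (S k) * (qint q (S k) / qint q (S k + n)) = qbinom q (n + k) k.
Proof.
  intros Hq. rewrite !qbinom_eq.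
  replace (n + S k)%nat with (S (n + k)) by lia.
  replace (S k + n)%nat with (S (n + k)) by lia.
  simpl qfact.
  assert (0 < qfact q (n + k)) by (apply qfact_pos; auto).
  assert (0 < qfact q n) by (apply qfact_pos; auto).
  assert (0 < qfact q k) by (apply qfact_pos; auto).
  assert (0 < qint q (S (n + k))) by (apply qint_pos; auto; lia).
  assert (0 < qint q (S k)) by (apply qint_pos; auto; lia).
  field. repeat split; lra.
Qed.

Definition wn (q : R) (n : nat) (x : R) (k : nat) : R := qbinom q (n + k) k * x ^ k.

Lemma wn_nonneg q n x k : 0 < q -> 0 <= x -> 0 <= wn q n x k.
Proof.
  intros Hq Hx. unfold wn. apply Rmult_le_pos. left; apply qbinom_pos; auto. apply pow_le; auto.
Qed.

Lemma pow_le_one q n : 0 <= q <= 1 -> q ^ n <= 1.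
Proof.
  intros Hq. induction n; simpl. lra. assert (0 <= q ^ n) by (apply pow_le; lra). nra.
Qed.

Lemma qprod_pos q n x : 0 < q <= 1 -> 0 <= x < 1 -> 0 < qprod q n x.
Proof.
  intros Hq Hx. induction n; simpl. lra.
  apply Rmult_lt_0_compat; auto.
  assert (q * q ^ n <= 1).
  { assert (q ^ n <= 1) by (apply pow_le_one; lra).
    assert (0 <= q ^ n) by (apply pow_le; lra). nra. }
  nra.
Qed.

Lemma ex_series_bounded (a : nat -> R) B : (forall n, 0 <= a n) ->
  (forall K, sum_f_R0 a K <= B) -> ex_series a.
Proof.
  intros Hp Hb.
  destruct (ex_finite_lim_seq_incr (sum_n a) B) as [l Hl].
  - intros n. rewrite sum_Sn. change (plus (sum_n a n) (a (S n))) with (sum_n a n + a (S n)).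
    specialize (Hp (S n)). lra.
  - intros n. rewrite sum_n_Reals. auto.
  - exists l. exact Hl.
Qed.

Lemma sum_f_R0_S (a : nat -> R) K : sum_f_R0 a (S K) = a O + sum_f_R0 (fun k => a (S k)) K.
Proof. rewrite decomp_sum by lia. reflexivity. Qed.

Lemma F_series q x : 0 < q <= 1 -> 0 <= x < 1 -> forall n,
  ex_series (wn q n x) /\ Series (wn q n x) = / qprod q n x.
Proof.
  intros Hq Hx n. induction n as [|n [IHex IHs]].
  - assert (E : forall k, wn q 0 x k = x ^ k).
    { intros k. unfold wn. rewrite qbinom_0k by lra. ring. }
    assert (Hg := is_series_geom x ltac:(rewrite Rabs_pos_eq; lra)).
    split.
    + apply (exR_ext (fun k => x ^ k)). intros; auto. exists (/ (1 - x)). auto.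
    + rewrite (Series_ext _ (fun k => x ^ k)) by auto. apply is_series_unique. simpl. auto.
  - set (r := q ^ (S n) * x).
    assert (Hr : 0 <= r < 1).
    { unfold r. assert (q ^ S n <= 1) by (apply pow_le_one; lra).
      assert (0 <= q ^ S n) by (apply pow_le; lra). split; nra. }
    assert (Hrec : forall k, wn q (S n) x (S k) = wn q n x (S k) + r * wn q (S n) x k).
    { intros k. unfold wn, r. rewrite qbinom_pascal by lra. simpl. ring. }
    assert (H0 : forall m, wn q m x 0 = 1).
    { intros m. unfold wn. rewrite qbinom_n0 by lra. ring. }
    assert (Hnn : forall m k, 0 <= wn q m x k) by (intros; apply wn_nonneg; lra).
    assert (HP := qprod_pos q n x Hq Hx).
    assert (Hex : ex_series (wn q (S n) x)).
    { apply (ex_series_bounded _ ((/ qprod q n x) / (1 - r))). auto.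
      intros K.
      assert (Hs : sum_f_R0 (wn q (S n) x) (S K) =
        sum_f_R0 (wn q n x) (S K) + r * sum_f_R0 (wn q (S n) x) K).
      { rewrite !sum_f_R0_S. rewrite H0, H0.
        rewrite (sum_eq _ (fun k => wn q n x (S k) + r * wn q (S n) x k)) by (intros; apply Hrec).
        rewrite plus_sum. rewrite sum_scal_l. ring. }
      assert (sum_f_R0 (wn q (S n) x) K <= sum_f_R0 (wn q (S n) x) (S K)).
      { rewrite tech5. specialize (Hnn (S n) (S K)). lra. }
      assert (sum_f_R0 (wn q n x) (S K) <= / qprod q n x).
      { rewrite <- IHs. apply partial_le_Series; auto. }
      apply Rmult_le_reg_r with (1 - r). lra.
      unfold Rdiv. rewrite Rmult_assoc, Rinv_l by lra. nra. }
    split; auto.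
    assert (E1 : Series (wn q (S n) x) = 1 + Series (fun k => wn q n x (S k)) + r * Series (wn q (S n) x)).
    { rewrite (Series_incr_1 (wn q (S n) x)) at 1 by auto. rewrite H0.
      rewrite (Series_ext _ (fun k => wn q n x (S k) + r * wn q (S n) x k)) by auto.
      rewrite Series_plus. rewrite Series_scal_l. ring.
      apply exR_S; auto. apply exR_scal; auto. }
    assert (E2 : Series (wn q n x) = 1 + Series (fun k => wn q n x (S k))).
    { rewrite Series_incr_1 by auto. rewrite H0. ring. }
    simpl qprod.
    assert (0 < 1 - q * q ^ n * x) by (unfold r in Hr; simpl in Hr; lra).
    apply Rmult_eq_reg_r with (1 - r). 2: lra.
    rewrite Rinv_mult. unfold r. simpl.
    replace (Series (wn q (S n) x) * (1 - q * q ^ n * x)) with (Series (wn q n x)).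
    rewrite IHs. field. split; lra.
    unfold r in E1. simpl in E1. lra.
Qed.

Lemma kor_series (w t : nat -> R) (f : R -> R) x B e d eta :
  0 <= B -> 0 < d -> (forall y, 0 <= y <= 1 -> Rabs (f y) <= B) ->
  (forall y z, 0 <= y <= 1 -> 0 <= z <= 1 -> Rabs (y - z) < d -> Rabs (f y - f z) < e) ->
  0 <= x <= 1 ->
  (forall k, 0 <= w k) -> (forall k, 0 <= t k <= 1) ->
  ex_series w -> Series w = 1 ->
  ex_series (fun k => w k * ((t k - x) * (t k - x))) ->
  Series (fun k => w k * ((t k - x) * (t k - x))) <= eta ->
  ex_series (fun k => w k * f (t k)) /\
  Rabs (Series (fun k => w k * f (t k)) - f x) <= e + 2 * B / (d * d) * eta.
Proof.
  intros HB Hd Hb Hu Hx Hw Ht Hexw Hsw Hex2 Hs2.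
  set (K := 2 * B / (d * d)).
  assert (HK : 0 <= K) by (unfold K; apply Rdiv_le_0_compat; [lra| apply Rmult_lt_0_compat; lra]).
  assert (Hexf : ex_series (fun k => w k * f (t k))).
  { apply (exR_le _ (fun k => B * w k)). intros k. rewrite Rabs_mult, Rabs_pos_eq by auto.
    rewrite (Rmult_comm B). apply Rmult_le_compat_l; auto. apply exR_scal; auto. }
  split; auto.
  set (u := fun k => w k * (f (t k) - f x)).
  assert (Hexu : ex_series u).
  { apply (exR_ext (fun k => w k * f (t k) + (- f x) * w k)). intros k; unfold u; ring.
    apply exR_plus; auto. apply exR_scal; auto. }
  assert (E : Series (fun k => w k * f (t k)) - f x = Series u).
  { unfold u. symmetry. rewrite (Series_ext _ (fun k => w k * f (t k) + (- f x) * w k)) by (intros; ring).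
    rewrite Series_plus, Series_scal_l, Hsw; auto. ring. apply exR_scal; auto. }
  rewrite E.
  set (b := fun k => e * w k + K * (w k * ((t k - x) * (t k - x)))).
  assert (Hexb : ex_series b) by (apply exR_plus; apply exR_scal; auto).
  assert (Hub : forall k, Rabs (u k) <= b k).
  { intros k. unfold u, b. rewrite Rabs_mult, (Rabs_pos_eq (w k)) by auto.
    pose proof (kor_pt f B e d HB Hd Hb Hu (t k) x (Ht k) Hx). fold K in H.
    pose proof (Hw k). nra. }
  assert (Hexabs : ex_series (fun k => Rabs (u k))).
  { apply (exR_le _ b). intros k. rewrite Rabs_Rabsolu. auto. auto. }
  eapply Rle_trans. apply Series_Rabs; auto.
  eapply Rle_trans. apply (Series_le _ b). intros k; split; [apply Rabs_pos | auto]. auto.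
  unfold b. rewrite Series_plus, !Series_scal_l, Hsw by (apply exR_scal; auto).
  assert (K * Series (fun k => w k * ((t k - x) * (t k - x))) <= K * eta) by (apply Rmult_le_compat_l; auto).
  unfold K in *. lra.
Qed.

Definition tn (q : R) (n k : nat) : R := qint q k / qint q (k + n).

Lemma tn_I q n k : 0 < q -> (1 <= n)%nat -> 0 <= tn q n k <= 1.
Proof.
  intros Hq Hn. unfold tn.
  assert (0 < qint q (k + n)) by (apply qint_pos; auto; lia).
  pose proof (qint_nonneg q k Hq). pose proof (qint_mono q k (k + n) Hq ltac:(lia)).
  split. apply Rdiv_le_0_compat; lra.
  apply Rmult_le_reg_r with (qint q (k + n)); auto. unfold Rdiv. rewrite Rmult_assoc, Rinv_l by lra. lra.
Qed.

Lemma tn_0 q n : tn q n 0 = 0.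
Proof. unfold tn. rewrite qint_0. unfold Rdiv. ring. Qed.

Lemma wn_shift q n x k : 0 < q -> wn q n x (S k) * tn q n (S k) = x * wn q n x k.
Proof.
  intros Hq. unfold wn, tn. rewrite <- (qbinom_shift q n k Hq). simpl. ring.
Qed.

Lemma tn_S_le q n k : 0 < q <= 1 -> (1 <= n)%nat -> tn q n (S k) <= / qint q (S n) + q * tn q n k.
Proof.
  intros Hq Hn. unfold tn.
  assert (A1 : 0 < qint q (S n)) by (apply qint_pos; lia || lra).
  assert (A2 : 0 < qint q (k + n)) by (apply qint_pos; lia || lra).
  assert (A3 : qint q (S n) <= qint q (S k + n)) by (apply qint_mono; lia || lra).
  assert (A4 : qint q (k + n) <= qint q (S k + n)) by (apply qint_mono; lia || lra).
  pose proof (qint_nonneg q k ltac:(lra)).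
  rewrite qint_S. unfold Rdiv. rewrite Rmult_plus_distr_r, Rmult_1_l.
  apply Rplus_le_compat. apply Rinv_le_contravar; lra.
  rewrite Rmult_assoc. apply Rmult_le_compat_l. lra.
  apply Rmult_le_compat_l. auto. apply Rinv_le_contravar; lra.
Qed.

Lemma MKZ_bound q n h B e d : 0 < q <= 1 -> (1 <= n)%nat -> 0 <= B -> 0 < d ->
  (forall y, 0 <= y <= 1 -> Rabs (h y) <= B) ->
  (forall y z, 0 <= y <= 1 -> 0 <= z <= 1 -> Rabs (y - z) < d -> Rabs (h y - h z) < e) ->
  forall x, 0 <= x <= 1 -> Rabs (MKZ q n h x - h x) <= e + 2 * B / (d * d) * / qint q (S n).
Proof.
  intros Hq Hn HB Hd Hb Hu x Hx.
  assert (He : 0 <= e).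
  { specialize (Hu x x Hx Hx). rewrite Rminus_diag, Rabs_R0 in Hu. specialize (Hu Hd).
    rewrite Rminus_diag, Rabs_R0 in Hu. lra. }
  assert (A1 : 0 < qint q (S n)) by (apply qint_pos; lia || lra).
  assert (HK : 0 <= 2 * B / (d * d) * / qint q (S n)).
  { apply Rmult_le_pos. apply Rdiv_le_0_compat; [lra| apply Rmult_lt_0_compat; lra].
    left; apply Rinv_0_lt_compat; auto. }
  unfold MKZ. destruct (Rlt_dec x 1) as [Hx1|Hx1].
  2:{ replace x with 1 by lra. rewrite Rminus_diag, Rabs_R0. lra. }
  set (P := qprod q n x).
  assert (HP : 0 < P) by (apply qprod_pos; lra).
  destruct (F_series q x ltac:(lra) ltac:(lra) n) as [HexF HF]. fold P in HF.
  set (t := tn q n).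
  set (w := fun k => P * wn q n x k).
  assert (Hw : forall k, 0 <= w k) by (intros; unfold w; apply Rmult_le_pos; [lra| apply wn_nonneg; lra]).
  assert (Ht : forall k, 0 <= t k <= 1) by (intros; apply tn_I; lra || lia).
  assert (Hexw : ex_series w) by (apply exR_scal; auto).
  assert (Hsw : Series w = 1).
  { unfold w. rewrite Series_scal_l, HF. field. lra. }
  assert (Hex1 : ex_series (fun k => wn q n x k * t k)).
  { apply (exR_le _ (wn q n x)). intros k. rewrite Rabs_mult, !Rabs_pos_eq.
    specialize (Ht k). pose proof (wn_nonneg q n x k ltac:(lra) ltac:(lra)). nra.
    apply Ht. apply wn_nonneg; lra. auto. }
  assert (HS1 : Series (fun k => wn q n x k * t k) = x * Series (wn q n x)).
  { rewrite Series_incr_1 by auto. unfold t at 1. rewrite tn_0, Rmult_0_r, Rplus_0_l.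
    rewrite (Series_ext _ (fun k => x * wn q n x k)) by (intros; unfold t; apply wn_shift; lra).
    apply Series_scal_l. }
  assert (Hex2 : ex_series (fun k => wn q n x k * (t k * t k))).
  { apply (exR_le _ (wn q n x)). intros k. rewrite Rabs_mult, !Rabs_pos_eq.
    specialize (Ht k). pose proof (wn_nonneg q n x k ltac:(lra) ltac:(lra)).
    assert (t k * t k <= 1) by nra. nra.
    specialize (Ht k); nra. apply wn_nonneg; lra. auto. }
  assert (HS2 : Series (fun k => wn q n x k * (t k * t k)) <=
     x * (/ qint q (S n) * Series (wn q n x) + q * (x * Series (wn q n x)))).
  { rewrite Series_incr_1 by auto. unfold t at 1 2. rewrite tn_0, Rmult_0_l, Rmult_0_r, Rplus_0_l.
    rewrite (Series_ext _ (fun k => x * (wn q n x k * t (S k)))).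
    2:{ intros k. unfold t. rewrite <- Rmult_assoc, wn_shift by lra. ring. }
    rewrite Series_scal_l. apply Rmult_le_compat_l. lra.
    rewrite <- HS1. rewrite <- !Series_scal_l.
    rewrite <- Series_plus.
    2: apply exR_scal; auto.
    2: apply exR_scal; auto.
    apply Series_mono.
    - intros k. pose proof (tn_S_le q n k ltac:(lra) Hn). fold t in H.
      pose proof (wn_nonneg q n x k ltac:(lra) ltac:(lra)).
      replace (/ qint q (S n) * wn q n x k + q * (wn q n x k * t k)) with
        (wn q n x k * (/ qint q (S n) + q * t k)) by ring.
      apply Rmult_le_compat_l; auto.
    - apply (exR_le _ (wn q n x)). intros k. rewrite Rabs_mult, !Rabs_pos_eq.
      specialize (Ht (S k)). pose proof (wn_nonneg q n x k ltac:(lra) ltac:(lra)). nra.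
      apply Ht. apply wn_nonneg; lra. auto.
    - apply exR_plus; apply exR_scal; auto. }
  assert (Hexv : ex_series (fun k => w k * ((t k - x) * (t k - x)))).
  { apply (exR_ext (fun k => P * (wn q n x k * (t k * t k)) + (-2 * x * P) * (wn q n x k * t k) + (x * x) * w k)).
    intros k; unfold w; ring.
    apply exR_plus. apply exR_plus. apply exR_scal; auto. apply exR_scal; auto. apply exR_scal; auto. }
  assert (Hvar : Series (fun k => w k * ((t k - x) * (t k - x))) <= / qint q (S n)).
  { rewrite (Series_ext _ (fun k => P * (wn q n x k * (t k * t k)) + ((-2 * x * P) * (wn q n x k * t k) + (x * x) * w k)))
      by (intros k; unfold w; ring).
    rewrite Series_plus, Series_plus, !Series_scal_l, HS1, Hsw.
    2, 3: apply exR_scal; auto.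
    2: apply exR_scal; auto.
    2: apply exR_plus; apply exR_scal; auto.
    rewrite HF.
    assert (P * Series (fun k => wn q n x k * (t k * t k)) <=
       P * (x * (/ qint q (S n) * / P + q * (x * / P)))).
    { apply Rmult_le_compat_l. lra. rewrite <- HF. auto. }
    replace (P * (x * (/ qint q (S n) * / P + q * (x * / P)))) with
      (x * / qint q (S n) + q * x * x) in H by (field; lra).
    replace (-2 * x * P * (x * / P)) with (-2 * x * x) by (field; lra).
    assert (x * / qint q (S n) <= / qint q (S n)).
    { pose proof (Rinv_0_lt_compat _ A1). nra. }
    assert (q * x * x <= x * x) by nra.
    lra. }
  destruct (kor_series w t h x B e d (/ qint q (S n)) HB Hd Hb Hu Hx Hw Ht Hexw Hsw Hexv Hvar)
    as [_ Hk].
  unfold w in Hk.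
  rewrite (Series_ext _ (fun k => P * (wn q n x k * h (t k)))) in Hk by (intros; ring).
  rewrite Series_scal_l in Hk.
  rewrite (Series_ext _ (fun k => wn q n x k * h (t k))) by (intros; unfold wn, t, tn; reflexivity).
  exact Hk.
Qed.


Lemma bernoulli_le q K : 0 <= q <= 1 -> 1 - INR K * (1 - q) <= q ^ K.
Proof.
  intros Hq. induction K as [|K IH]. simpl. lra.
  rewrite S_INR. simpl.
  assert (q * (1 - INR K * (1 - q)) <= q * q ^ K) by (apply Rmult_le_compat_l; lra).
  pose proof (pos_INR K). assert (0 <= INR K * ((1 - q) * (1 - q))) by (apply Rmult_le_pos; nra). nra.
Qed.

Lemma qint_ge q K : 0 < q <= 1 -> INR K * q ^ K <= qint q K.
Proof.
  intros Hq. induction K as [|K IH]. rewrite qint_0. simpl. lra.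
  rewrite qint_S, S_INR. simpl.
  assert (q ^ K <= 1) by (apply pow_le_one; lra).
  assert (0 <= q ^ K) by (apply pow_le; lra).
  nra.
Qed.

Lemma qint_diverge (q : nat -> R) :
  (forall n : nat, (1 <= n)%nat -> 0 < q n <= 1) -> is_lim_seq q 1 ->
  forall M, exists N, forall n, (N <= n)%nat -> M <= qint (q n) (S n).
Proof.
  intros Hq Hlim M.
  destruct (INR_unbounded (2 * M)) as [K0 HK0].
  set (K := S K0).
  assert (HK : 0 < INR K) by (apply lt_0_INR; unfold K; lia).
  assert (HKM : 2 * M <= INR K) by (unfold K; rewrite S_INR; lra).
  apply is_lim_seq_spec in Hlim.
  destruct (Hlim (mkposreal (/ (2 * INR K)) ltac:(apply Rinv_0_lt_compat; lra))) as [N1 HN1].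
  exists (max N1 K). intros n Hn.
  assert (Hn1 : (1 <= n)%nat) by (unfold K in Hn; lia).
  specialize (Hq n Hn1). specialize (HN1 n ltac:(lia)).
  assert (H1q : 1 - q n <= / (2 * INR K)).
  { assert (HN1b : Rabs (q n - 1) < / (2 * INR K)) by exact HN1. apply Rabs_lt_between in HN1b. lra. }
  eapply Rle_trans. 2: apply (qint_mono (q n) K (S n)); [lra| lia].
  eapply Rle_trans. 2: apply qint_ge; lra.
  pose proof (bernoulli_le (q n) K ltac:(lra)).
  assert (INR K * (1 - q n) <= / 2).
  { apply Rle_trans with (INR K * / (2 * INR K)). apply Rmult_le_compat_l; lra.
    right. field. lra. }
  assert (INR K / 2 <= INR K * q n ^ K) by nra.
  lra.
Qed.

Lemma MKZ_conv (q : nat -> R) h :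
  (forall n : nat, (1 <= n)%nat -> 0 < q n <= 1) -> is_lim_seq q 1 -> contI h ->
  forall eps, 0 < eps -> exists N, forall n, (N <= n)%nat -> (1 <= n)%nat ->
  forall x, 0 <= x <= 1 -> Rabs (h x - MKZ (q n) n h x) <= eps.
Proof.
  intros Hq Hlim Hh eps Heps.
  destruct (contI_bnd h Hh) as [B [HB Hb]].
  destruct (contI_unif h Hh (eps / 2)) as [d [Hd Hu]]; [lra|].
  set (K := 2 * B / (d * d)).
  assert (HK : 0 <= K) by (unfold K; apply Rdiv_le_0_compat; [lra| apply Rmult_lt_0_compat; lra]).
  destruct (qint_diverge q Hq Hlim (2 * K / eps + 1)) as [N HN].
  exists N. intros n Hn Hn1 x Hx.
  rewrite Rabs_minus_sym.
  eapply Rle_trans. apply (MKZ_bound (q n) n h B (eps / 2) d); auto.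
  specialize (HN n Hn).
  assert (Hpos : 0 < 2 * K / eps + 1).
  { assert (0 <= 2 * K / eps) by (apply Rdiv_le_0_compat; lra). lra. }
  assert (K * / qint (q n) (S n) <= eps / 2).
  { apply Rle_trans with (K * / (2 * K / eps + 1)).
    apply Rmult_le_compat_l; auto. apply Rinv_le_contravar; lra.
    apply Rmult_le_reg_r with (2 * K / eps + 1); auto.
    rewrite Rmult_assoc, Rinv_l by lra.
    replace (eps / 2 * (2 * K / eps + 1)) with (K + eps / 2) by (field; lra). lra. }
  fold K. lra.
Qed.

Lemma xpow_contI a : 0 < a -> contI (xpow a).
Proof.
  intros Ha x Hx e He.
  destruct (Req_dec x 0) as [->|Hx0].
  - exists (exp (ln e / a)). split. apply exp_pos.
    intros y Hy Hyx. rewrite xpow_0. rewrite !Rminus_0_r in *.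
    destruct (Req_dec y 0) as [->|Hy0]. rewrite xpow_0, Rabs_R0. auto.
    rewrite xpow_pos_eq by lra. rewrite Rabs_pos_eq by (left; apply Rpower_pos).
    rewrite Rabs_pos_eq in Hyx by lra.
    unfold Rpower. rewrite <- (exp_ln e) by auto. apply exp_increasing.
    assert (ln y < ln e / a).
    { rewrite <- (ln_exp (ln e / a)). apply ln_increasing; lra. }
    apply Rmult_lt_reg_l with (/ a). apply Rinv_0_lt_compat; auto.
    replace (/ a * (a * ln y)) with (ln y) by (field; lra).
    replace (/ a * ln e) with (ln e / a) by (unfold Rdiv; ring). auto.
  - assert (Hxp : 0 < x) by lra.
    assert (Hc : continuity_pt (fun y => Rpower y a) x).
    { apply derivable_continuous_pt. exists (a * Rpower x (a - 1)).
      apply derivable_pt_lim_power. auto. }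
    unfold continuity_pt, continue_in, limit1_in, limit_in in Hc. simpl in Hc.
    unfold R_dist in Hc.
    destruct (Hc e He) as [d [Hd H]].
    exists (Rmin d x). split. apply Rmin_pos; auto.
    intros y Hy Hyx.
    assert (Hyp : 0 < y).
    { pose proof (Rmin_r d x). apply Rabs_lt_between in Hyx. lra. }
    rewrite !xpow_pos_eq by auto.
    destruct (Req_dec y x) as [->|Hne]. rewrite Rminus_diag, Rabs_R0; auto.
    apply H. split. split. exact I. auto.
    pose proof (Rmin_l d x). lra.
Qed.


Section Fractal.
Variable N : nat.
Variable xs : nat -> R.
Hypothesis Hx1 : xs 1%nat = 0.
Hypothesis HxN : xs N = 1.
Hypothesis Hxinc : forall i : nat, (1 <= i < N)%nat -> xs i < xs (S i).
Variable alpha : nat -> R -> R.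
Variable c : R.
Hypothesis Hc : 0 <= c < 1.
Hypothesis Hal : forall i, (1 <= i <= N - 1)%nat -> forall x, 0 <= x <= 1 -> Rabs (alpha i x) <= c.
Variable g : R -> R.
Variable eta : R.
Hypothesis Hg : forall x, 0 <= x <= 1 -> Rabs (g x) <= eta.
Hypothesis Hg0 : g 0 = 0.
Hypothesis Hg1 : g 1 = 0.

Lemma xs_mono i j : (1 <= i <= j)%nat -> (j <= N)%nat -> xs i <= xs j.
Proof.
  intros Hij HjN. induction j as [|j IH]. lia.
  destruct (Nat.eq_dec i (S j)) as [->|Hne]. lra.
  assert (xs i <= xs j) by (apply IH; lia).
  assert (xs j < xs (S j)) by (apply Hxinc; lia). lra.
Qed.

Lemma valid_ge2 i : (1 <= i <= N - 1)%nat -> (2 <= N)%nat.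
Proof. lia. Qed.

Lemma uaff_range i x : (1 <= i <= N - 1)%nat -> 0 <= x <= 1 ->
  xs i <= uaff xs i x <= xs (S i).
Proof.
  intros Hi Hx. unfold uaff. assert (xs i < xs (S i)) by (apply Hxinc; lia). nra.
Qed.

Lemma uaff_I i x : (1 <= i <= N - 1)%nat -> 0 <= x <= 1 -> 0 <= uaff xs i x <= 1.
Proof.
  intros Hi Hx. pose proof (uaff_range i x Hi Hx).
  assert (xs 1 <= xs i) by (apply xs_mono; lia).
  assert (xs (S i) <= xs N) by (apply xs_mono; lia). lra.
Qed.

Lemma node i x j z : (1 <= i <= N - 1)%nat -> (1 <= j <= N - 1)%nat ->
  0 <= x <= 1 -> 0 <= z <= 1 -> uaff xs i x = uaff xs j z ->
  (i = j /\ x = z) \/ ((x = 0 \/ x = 1) /\ (z = 0 \/ z = 1)).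
Proof.
  intros Hi Hj Hx Hz E.
  assert (Hdi : xs i < xs (S i)) by (apply Hxinc; lia).
  assert (Hdj : xs j < xs (S j)) by (apply Hxinc; lia).
  destruct (lt_eq_lt_dec i j) as [[Hlt| ->]|Hlt].
  - right. assert (xs (S i) <= xs j) by (apply xs_mono; lia).
    pose proof (uaff_range i x Hi Hx). pose proof (uaff_range j z Hj Hz).
    unfold uaff in *.
    assert (x = 1) by nra. assert (z = 0) by nra. lra.
  - left. split; auto. unfold uaff in E.
    apply Rmult_eq_reg_l with (xs (S j) - xs j); lra.
  - right. assert (xs (S j) <= xs i) by (apply xs_mono; lia).
    pose proof (uaff_range i x Hi Hx). pose proof (uaff_range j z Hj Hz).
    unfold uaff in *.
    assert (x = 0) by nra. assert (z = 1) by nra. lra.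
Qed.

Lemma cover y : (2 <= N)%nat -> 0 <= y <= 1 ->
  exists i x, (1 <= i <= N - 1)%nat /\ 0 <= x <= 1 /\ uaff xs i x = y.
Proof.
  intros HN Hy.
  assert (P : forall k, (2 <= k <= N)%nat -> y <= xs k ->
     exists i, (1 <= i <= k - 1)%nat /\ xs i <= y <= xs (S i)).
  { induction k as [|k IH]; intros Hk Hyk. lia.
    destruct (Rle_dec (xs k) y) as [Hle|Hlt].
    - exists k. split. lia. split; auto.
    - destruct (Nat.eq_dec k 1) as [->|Hk1]. rewrite Hx1 in Hlt. lra.
      destruct (IH ltac:(lia) ltac:(lra)) as [i [Hi Hi2]]. exists i. split; auto. lia. }
  destruct (P N ltac:(lia) ltac:(lra)) as [i [Hi [H1 H2]]].
  assert (Hd : xs i < xs (S i)) by (apply Hxinc; lia).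
  exists i, ((y - xs i) / (xs (S i) - xs i)). split. lia. split.
  - split. apply Rdiv_le_0_compat; lra.
    apply Rmult_le_reg_r with (xs (S i) - xs i). lra.
    unfold Rdiv. rewrite Rmult_assoc, Rinv_l by lra. lra.
  - unfold uaff. field. lra.
Qed.

Definition selP (y : R) (p : nat * R) : Prop :=
  0 <= y <= 1 -> (1 <= fst p <= N - 1)%nat /\ 0 <= snd p <= 1 /\ uaff xs (fst p) (snd p) = y.

Hypothesis HN2 : (2 <= N)%nat.

Lemma sel_ex y : exists p, selP y p.
Proof.
  destruct (classic (0 <= y <= 1)) as [Hy|Hy].
  - destruct (cover y HN2 Hy) as [i [x [H1 [H2 H3]]]]. exists (i, x). intros _. simpl. auto.
  - exists (O, 0). intros H. contradiction.
Qed.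

Definition sel (y : R) : nat * R := proj1_sig (constructive_indefinite_description _ (sel_ex y)).

Lemma sel_spec y : selP y (sel y).
Proof. unfold sel. destruct (constructive_indefinite_description _ (sel_ex y)). simpl. auto. Qed.

Definition T (D : R -> R) (y : R) : R :=
  alpha (fst (sel y)) (snd (sel y)) * (D (snd (sel y)) + g (snd (sel y))).

Lemma T_eq D : D 0 = 0 -> D 1 = 0 -> forall i x, (1 <= i <= N - 1)%nat -> 0 <= x <= 1 ->
  T D (uaff xs i x) = alpha i x * (D x + g x).
Proof.
  intros D0 D1 i x Hi Hx. unfold T.
  destruct (sel_spec (uaff xs i x) (uaff_I i x Hi Hx)) as [Hj [Hz E]].
  destruct (node i x (fst (sel (uaff xs i x))) (snd (sel (uaff xs i x))) Hi Hj Hx Hz (eq_sym E))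
    as [[<- <-]|[Hx01 Hz01]].
  - reflexivity.
  - destruct Hx01 as [-> | ->]; destruct Hz01 as [-> | ->];
      rewrite ?D0, ?D1, ?Hg0, ?Hg1; ring.
Qed.

Lemma T_0 D : D 0 = 0 -> D 1 = 0 -> T D 0 = 0.
Proof.
  intros D0 D1. replace 0 with (uaff xs 1 0) at 1 by (unfold uaff; rewrite Hx1; ring).
  rewrite T_eq by (auto; lia || lra). rewrite D0, Hg0. ring.
Qed.

Lemma T_1 D : D 0 = 0 -> D 1 = 0 -> T D 1 = 0.
Proof.
  intros D0 D1. replace 1 with (uaff xs (N - 1) 1) at 1.
  - rewrite T_eq by (auto; lia || lra). rewrite D1, Hg1. ring.
  - unfold uaff. replace (S (N - 1)) with N by lia. rewrite HxN. ring.
Qed.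

Fixpoint Dk (k : nat) : R -> R :=
  match k with O => fun _ => 0 | S k' => T (Dk k') end.

Lemma Dk_01 k : Dk k 0 = 0 /\ Dk k 1 = 0.
Proof.
  induction k as [|k [IH0 IH1]]; simpl. auto. split. apply T_0; auto. apply T_1; auto.
Qed.

Lemma T_sel_I y : 0 <= y <= 1 -> (1 <= fst (sel y) <= N - 1)%nat /\ 0 <= snd (sel y) <= 1.
Proof. intros Hy. destruct (sel_spec y Hy) as [A [B _]]. auto. Qed.

Lemma eta_nonneg : 0 <= eta.
Proof. pose proof (Hg 0 ltac:(lra)). pose proof (Rabs_pos (g 0)). lra. Qed.

Lemma Dk_diff k : forall y, 0 <= y <= 1 -> Rabs (Dk (S k) y - Dk k y) <= c ^ k * (c * eta).
Proof.
  induction k as [|k IH]; intros y Hy; destruct (T_sel_I y Hy) as [Hi Hx].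
  - change (Dk 1 y) with (T (fun _ => 0) y). change (Dk 0 y) with 0. unfold T.
    rewrite Rminus_0_r, Rplus_0_l, Rabs_mult. rewrite Rmult_1_l.
    apply Rmult_le_compat. apply Rabs_pos. apply Rabs_pos. apply Hal; auto. apply Hg; auto.
  - change (Dk (S (S k)) y) with (T (Dk (S k)) y). change (Dk (S k) y) with (T (Dk k) y).
    unfold T at 1 2.
    set (a := alpha (fst (sel y)) (snd (sel y))). set (z := snd (sel y)).
    replace (a * (Dk (S k) z + g z) - a * (Dk k z + g z)) with (a * (Dk (S k) z - Dk k z)) by ring.
    rewrite Rabs_mult. replace (c ^ S k * (c * eta)) with (c * (c ^ k * (c * eta))) by (simpl; ring).
    apply Rmult_le_compat. apply Rabs_pos. apply Rabs_pos. apply Hal; auto. apply IH; auto.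
Qed.

Lemma Dk_bnd k : forall y, 0 <= y <= 1 -> Rabs (Dk k y) <= c * eta / (1 - c).
Proof.
  pose proof eta_nonneg as He.
  assert (0 <= c * eta / (1 - c)) by (apply Rdiv_le_0_compat; nra).
  induction k as [|k IH]; intros y Hy; simpl. rewrite Rabs_R0. auto.
  destruct (T_sel_I y Hy) as [Hi Hx]. unfold T. rewrite Rabs_mult.
  apply Rle_trans with (c * (c * eta / (1 - c) + eta)).
  - apply Rmult_le_compat. apply Rabs_pos. apply Rabs_pos. apply Hal; auto.
    eapply Rle_trans. apply Rabs_triang. apply Rplus_le_compat. apply IH; auto. apply Hg; auto.
  - right. field. lra.
Qed.

Definition Dlim (y : R) : R := real (Lim_seq (fun k => Dk k y)).

Lemma Dlim_cv y : 0 <= y <= 1 -> is_lim_seq (fun k => Dk k y) (Dlim y).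
Proof.
  intros Hy.
  set (df := fun k => Dk (S k) y - Dk k y).
  assert (Hex : ex_series df).
  { apply (exR_le _ (fun k => (c * eta) * c ^ k)).
    - intros k. rewrite Rmult_comm. apply Dk_diff; auto.
    - apply exR_scal. apply ex_series_geom. rewrite Rabs_pos_eq; lra. }
  destruct Hex as [L HL].
  assert (Hpart : forall k, sum_n df k = Dk (S k) y).
  { induction k. rewrite sum_O. unfold df. change (Dk 0 y) with 0. fixR. ring.
    rewrite sum_Sn, IHk. unfold df. fixR. unfold plus; simpl. ring. }
  assert (Hl : is_lim_seq (fun k => Dk k y) L).
  { apply is_lim_seq_incr_1. apply (is_lim_seq_ext (sum_n df)). auto. exact HL. }
  unfold Dlim. rewrite (is_lim_seq_unique _ _ Hl). simpl. auto.
Qed.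

Lemma fractal_D : exists D : R -> R,
  (forall x, 0 <= x <= 1 -> Rabs (D x) <= c * eta / (1 - c)) /\
  (forall i x, (1 <= i <= N - 1)%nat -> 0 <= x <= 1 ->
     D (uaff xs i x) = alpha i x * (D x + g x)).
Proof.
  exists Dlim. split.
  - intros x Hx. pose proof (Dlim_cv x Hx) as Hl.
    assert (Rabs (Dlim x) <= c * eta / (1 - c)).
    { apply Rabs_le.
      pose proof (fun k => Rabs_le_between (Dk k x) (c * eta / (1 - c))) as Hb.
      split.
      - assert (Rbar_le (- (c * eta / (1 - c))) (Dlim x)).
        { apply (is_lim_seq_le (fun _ => - (c * eta / (1 - c))) (fun k => Dk k x)).
          intros k. apply Hb. apply Dk_bnd; auto. apply is_lim_seq_const. auto. }
        simpl in H. auto.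
      - assert (Rbar_le (Dlim x) (c * eta / (1 - c))).
        { apply (is_lim_seq_le (fun k => Dk k x) (fun _ => c * eta / (1 - c))).
          intros k. apply Hb. apply Dk_bnd; auto. auto. apply is_lim_seq_const. }
        simpl in H. auto. }
    auto.
  - intros i x Hi Hx.
    pose proof (Dlim_cv x Hx) as Hl.
    pose proof (Dlim_cv (uaff xs i x) (uaff_I i x Hi Hx)) as Hl2.
    apply is_lim_seq_incr_1 in Hl2.
    assert (Hl3 : is_lim_seq (fun k => Dk (S k) (uaff xs i x)) (alpha i x * (Dlim x + g x))).
    { apply (is_lim_seq_ext (fun k => alpha i x * (Dk k x + g x))).
      - intros k. simpl. rewrite T_eq; auto; apply Dk_01.
      - apply (is_lim_seq_scal_l _ (alpha i x) (Dlim x + g x)).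
        apply is_lim_seq_plus'. auto. apply is_lim_seq_const. }
    apply is_lim_seq_unique in Hl2. apply is_lim_seq_unique in Hl3.
    rewrite Hl2 in Hl3. injection Hl3. auto.
Qed.

End Fractal.


Lemma Series_zero : Series (fun _ : nat => 0) = 0.
Proof. rewrite (Series_ext _ (fun k => 0 * 0)) by (intros; ring). rewrite Series_scal_l. ring. Qed.

Lemma qprod_0 q n : qprod q n 0 = 1.
Proof. induction n; simpl. ring. rewrite IHn. ring. Qed.

Lemma MKZ_0 q n h : 0 < q <= 1 -> MKZ q n h 0 = h 0.
Proof.
  intros Hq. unfold MKZ. destruct (Rlt_dec 0 1) as [_|H]; [|lra].
  rewrite qprod_0, Rmult_1_l.
  set (a := fun k => qbinom q (n + k) k * 0 ^ k * h (qint q k / qint q (k + n))).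
  assert (HaS : forall k, a (S k) = 0) by (intros; unfold a; simpl; ring).
  assert (Hex : ex_series a).
  { apply exR_unS. apply (exR_ext (fun k => 0 * (/ 2) ^ k)). intros; rewrite HaS; ring.
    apply exR_scal. apply ex_series_geom. rewrite Rabs_pos_eq; lra. }
  rewrite Series_incr_1 by auto. rewrite (Series_ext _ (fun _ => 0)) by auto. rewrite Series_zero.
  unfold a. rewrite qbinom_n0 by lra. rewrite qint_0. simpl. unfold Rdiv. rewrite Rmult_0_l. ring.
Qed.

Lemma MKZ_1 q n h : MKZ q n h 1 = h 1.
Proof. unfold MKZ. destruct (Rlt_dec 1 1); [lra|reflexivity]. Qed.

Lemma alpha_unif N (alpha : nat -> R -> R) :
  (forall i : nat, (1 <= i <= N - 1)%nat ->
     exists c : R, c < 1 /\ forall x, 0 <= x <= 1 -> Rabs (alpha i x) <= c) ->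
  exists c, 0 <= c < 1 /\ forall i, (1 <= i <= N - 1)%nat -> forall x, 0 <= x <= 1 -> Rabs (alpha i x) <= c.
Proof.
  intros H.
  assert (G : forall m, exists c, 0 <= c < 1 /\ forall i, (1 <= i <= m)%nat -> (i <= N - 1)%nat ->
     forall x, 0 <= x <= 1 -> Rabs (alpha i x) <= c).
  { induction m as [|m [c [Hc Hm]]].
    - exists 0. split. lra. intros; lia.
    - destruct (le_dec (S m) (N - 1)) as [Hle|Hgt].
      + destruct (H (S m) ltac:(lia)) as [c' [Hc' Hm']].
        exists (Rmax c c'). split. split. apply Rle_trans with c; [lra| apply Rmax_l].
        unfold Rmax; destruct Rle_dec; lra.
        intros i Hi HiN x Hx. destruct (Nat.eq_dec i (S m)) as [->|Hne].
        * eapply Rle_trans. apply Hm'; auto. apply Rmax_r.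
        * eapply Rle_trans. apply Hm; auto; lia. apply Rmax_l.
      + exists c. split; auto. intros i Hi HiN x Hx. apply Hm; auto; lia. }
  destruct (G (N - 1)%nat) as [c [Hc Hm]]. exists c. split; auto.
  intros i Hi x Hx. apply Hm; auto; lia.
Qed.

Lemma fractal_G N xs (Hx1 : xs 1%nat = 0) (HxN : xs N = 1)
  (Hxinc : forall i : nat, (1 <= i < N)%nat -> xs i < xs (S i))
  alpha c (Hc : 0 <= c < 1)
  (Hal : forall i, (1 <= i <= N - 1)%nat -> forall x, 0 <= x <= 1 -> Rabs (alpha i x) <= c)
  q n h eta (Hq : 0 < q <= 1) (Hh : exists B, forall x, 0 <= x <= 1 -> Rabs (h x) <= B)
  (Heta : forall x, 0 <= x <= 1 -> Rabs (h x - MKZ q n h x) <= eta) :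
  exists G, is_fractal N xs alpha q n h G /\
    forall x, 0 <= x <= 1 -> Rabs (G x - h x) <= c * eta / (1 - c).
Proof.
  assert (He : 0 <= eta) by (pose proof (Heta 0 ltac:(lra)); pose proof (Rabs_pos (h 0 - MKZ q n h 0)); lra).
  destruct Hh as [B HB].
  destruct (le_lt_dec 2 N) as [HN2|HN2].
  - set (g := fun x => h x - MKZ q n h x).
    assert (Hg0 : g 0 = 0) by (unfold g; rewrite MKZ_0 by auto; ring).
    assert (Hg1 : g 1 = 0) by (unfold g; rewrite MKZ_1; ring).
    destruct (fractal_D N xs Hx1 HxN Hxinc alpha c Hc Hal g eta Heta Hg0 Hg1 HN2) as [D [HD1 HD2]].
    exists (fun x => h x + D x). split.
    + split.
      * exists (B + c * eta / (1 - c)). intros x Hx. eapply Rle_trans. apply Rabs_triang.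
        apply Rplus_le_compat; auto.
      * intros i x Hi Hx. rewrite HD2 by auto. unfold g. ring.
    + intros x Hx. replace (h x + D x - h x) with (D x) by ring. auto.
  - destruct N as [|[|N']]; [|rewrite Hx1 in HxN; lra| lia].
    exists h. split.
    + split. exists B; auto. intros i x Hi. lia.
    + intros x Hx. rewrite Rminus_diag, Rabs_R0. apply Rdiv_le_0_compat; nra.
Qed.

Lemma finite_unif (Q : nat -> nat -> Prop) M :
  (forall j, (1 <= j <= M)%nat -> exists Nj, forall n, (Nj <= n)%nat -> Q j n) ->
  exists N0, forall n, (N0 <= n)%nat -> forall j, (1 <= j <= M)%nat -> Q j n.
Proof.
  induction M as [|M IH]; intros H.
  - exists O. intros; lia.
  - destruct IH as [N1 H1]. intros j Hj; apply H; lia.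
    destruct (H (S M) ltac:(lia)) as [N2 H2].
    exists (max N1 N2). intros n Hn j Hj.
    destruct (Nat.eq_dec j (S M)) as [->|Hne]. apply H2; lia. apply H1; lia.
Qed.

Lemma sumR_abs (a : nat -> R) n m : Rabs (sum_n_m a n m) <= sum_n_m (fun j => Rabs (a j)) n m.
Proof. exact (norm_sum_n_m (V := R_NormedModule) a n m). Qed.

Lemma sumR_le_loc (a b : nat -> R) n m : (forall k, (n <= k <= m)%nat -> a k <= b k) ->
  sum_n_m a n m <= sum_n_m b n m.
Proof.
  intros H. rewrite (sumR_ext_loc a (fun k => Rmin (a k) (b k))).
  apply sum_n_m_le. intros k. apply Rmin_r.
  intros k Hk. rewrite Rmin_left; auto.
Qed.

Theorem theorem5p2
  (N : nat) (xs : nat -> R)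
  (Hx1 : xs 1%nat = 0) (HxN : xs N = 1)
  (Hxinc : forall i : nat, (1 <= i < N)%nat -> xs i < xs (S i))
  (q : nat -> R)
  (Hq : forall n : nat, (1 <= n)%nat -> 0 < q n <= 1)
  (Hqlim : is_lim_seq q 1)
  (alpha : nat -> R -> R)
  (Halpha : forall i : nat, (1 <= i <= N - 1)%nat ->
     exists c : R, c < 1 /\ forall x, 0 <= x <= 1 -> Rabs (alpha i x) <= c)
  (lam : nat -> R)
  (Hlam_pos : forall i : nat, (1 <= i)%nat -> 0 < lam i)
  (Hlam_dist : forall i j : nat, (1 <= i)%nat -> (1 <= j)%nat -> i <> j -> lam i <> lam j)
  (Hlam_inf : exists d : R, 0 < d /\ forall i : nat, (1 <= i)%nat -> d <= lam i)
  (Hlam_div : is_lim_seq (fun m => sum_n_m (fun i => / lam i) 1 m) p_infty) :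
  forall f : R -> R,
    (forall x, 0 <= x <= 1 -> forall e, 0 < e -> exists d, 0 < d /\
        forall y, 0 <= y <= 1 -> Rabs (y - x) < d -> Rabs (f y - f x) < e) ->
  forall eps : R, 0 < eps ->
    exists (n m : nat) (c : nat -> R) (G : nat -> R -> R),
      (1 <= n)%nat /\ (1 <= m)%nat /\
      (forall j : nat, (1 <= j <= m)%nat ->
          is_fractal N xs alpha (q n) n (xpow (lam j)) (G j)) /\
      (forall x, 0 <= x <= 1 ->
          Rabs (f x - (c O + sum_n_m (fun j => c j * G j x) 1 m)) < eps).
Proof.
  intros f Hf eps Heps.
  assert (Hincl := muntz_dense lam f Hlam_pos Hlam_dist Hlam_inf Hlam_div Hf).
  destruct (Hincl (eps / 2)) as [h [[m [cc Hh]] Happ]]; [lra|].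
  set (M := S m).
  set (cc' := fun j => if (j <=? m)%nat then cc j else 0).
  assert (Hsum : forall x, sum_n_m (fun j => cc' j * xpow (lam j) x) 1 M =
     sum_n_m (fun j => cc j * xpow (lam j) x) 1 m).
  { intros x. unfold cc'. apply (sum_trunc cc (fun j => xpow (lam j) x) m M). unfold M; lia. }
  set (S0 := sum_n_m (fun j => Rabs (cc' j)) 1 M).
  assert (HS0 : 0 <= S0).
  { unfold S0. eapply Rle_trans. apply Rabs_pos.
    eapply Rle_trans. apply (sumR_abs (fun j => Rabs (cc' j))).
    right. apply sumR_ext. intros k. apply Rabs_Rabsolu. }
  destruct (alpha_unif N alpha Halpha) as [c [Hc Hal]].
  set (eta := eps * (1 - c) / (4 * (1 + S0))).
  assert (Heta : 0 < eta).
  { unfold eta. apply Rdiv_lt_0_compat. apply Rmult_lt_0_compat; lra. lra. }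
  assert (Hconv : forall j, (1 <= j <= M)%nat -> exists Nj, forall n, (Nj <= n)%nat ->
     (1 <= n)%nat -> forall x, 0 <= x <= 1 ->
     Rabs (xpow (lam j) x - MKZ (q n) n (xpow (lam j)) x) <= eta).
  { intros j Hj. apply MKZ_conv; auto. apply xpow_contI. apply Hlam_pos. lia. }
  destruct (finite_unif _ M Hconv) as [N0 HN0].
  set (n := max N0 1).
  assert (Hn1 : (1 <= n)%nat) by (unfold n; lia).
  assert (Hqn := Hq n Hn1).
  assert (HG : forall j, exists Gj : R -> R, (1 <= j <= M)%nat ->
     is_fractal N xs alpha (q n) n (xpow (lam j)) Gj /\
     forall x, 0 <= x <= 1 -> Rabs (Gj x - xpow (lam j) x) <= c * eta / (1 - c)).
  { intros j. destruct (le_dec 1 j) as [Hj1|Hj1]; [destruct (le_dec j M) as [Hj2|Hj2]|].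
    - destruct (fractal_G N xs Hx1 HxN Hxinc alpha c Hc Hal (q n) n (xpow (lam j)) eta Hqn)
        as [Gj HGj].
      + exists 1. intros x Hx. pose proof (xpow_le1 (lam j) x (Hlam_pos j Hj1) Hx).
        rewrite Rabs_pos_eq; lra.
      + apply (HN0 n ltac:(unfold n; lia) j ltac:(lia) Hn1).
      + exists Gj. intros _. auto.
    - exists (fun _ => 0). intros; lia.
    - exists (fun _ => 0). intros; lia. }
  destruct (functional_choice _ HG) as [G HGs].
  exists n, M, cc', G. split; auto. split. unfold M; lia. split.
  { intros j Hj. apply (HGs j Hj). }
  intros x Hx.
  specialize (Happ x Hx). rewrite Hh in Happ by auto.
  assert (E : f x - (cc' 0%nat + sum_n_m (fun j => cc' j * G j x) 1 M) =
    (f x - (cc 0%nat + sum_n_m (fun j => cc j * xpow (lam j) x) 1 m)) +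
    sum_n_m (fun j => cc' j * (xpow (lam j) x - G j x)) 1 M).
  { rewrite <- Hsum.
    rewrite (sumR_ext (fun j => cc' j * (xpow (lam j) x - G j x))
      (fun j => cc' j * xpow (lam j) x + (-1) * (cc' j * G j x))) by (intros; ring).
    rewrite sumR_plus, sumR_mult_l. unfold cc' at 1. simpl. ring. }
  rewrite E.
  eapply Rle_lt_trans. apply Rabs_triang.
  assert (Hb : Rabs (sum_n_m (fun j => cc' j * (xpow (lam j) x - G j x)) 1 M) <= S0 * (c * eta / (1 - c))).
  { eapply Rle_trans. apply sumR_abs.
    unfold S0. rewrite Rmult_comm, <- sumR_mult_l.
    apply sumR_le_loc. intros k Hk. rewrite Rabs_mult.
    rewrite Rmult_comm. apply Rmult_le_compat_r. apply Rabs_pos.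
    rewrite Rabs_minus_sym. apply (HGs k Hk). auto. }
  assert (S0 * (c * eta / (1 - c)) < eps / 2).
  { unfold eta.
    replace (S0 * (c * (eps * (1 - c) / (4 * (1 + S0))) / (1 - c))) with
      (c * eps / 4 * (S0 / (1 + S0))) by (field; lra).
    assert (S0 / (1 + S0) < 1).
    { apply Rmult_lt_reg_r with (1 + S0). lra. unfold Rdiv. rewrite Rmult_assoc, Rinv_l by lra. lra. }
    assert (0 <= S0 / (1 + S0)) by (apply Rdiv_le_0_compat; lra).
    assert (c * eps / 4 <= eps / 4) by nra.
    assert (0 <= c * eps / 4) by nra.
    nra. }
  lra.
Qed.
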